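(* Assume (C) and (I). Fix $i\in S$ and $Q,Q^*\in\mathcal Q$. Then, as $\varepsilon\downarrow0$, $$F(i,Q\otimes_\varepsilon Q^* )=F_\varepsilon(i,Q^* )+\big[f(0,i,Q_i)+F_\varepsilon(Q^* )\cdot Q_i\big]\varepsilon+o(\varepsilon).$$ Suppose in addition that condition (H) holds. Then, as $\varepsilon\downarrow0$, $$F(i,Q^* )-F(i,Q\otimes_\varepsilon Q^* )=\big(\Gamma^{Q^*}_i(Q^*_i)-\Gamma^{Q^*}_i(Q_i)\big)\varepsilon+o(\varepsilon).$$
   Context: Let $S=\{1,\dots,N\}$, $N\in\mathbb N$. For $i\in S$ let $E_i=\{q=(q_1,\dots,q_N)\in\mathbb R^N: q_j\ge0\text{ for }j\ne i,\ q_i=-\sum_{j\ne i}q_j\}$ and let $D_i\subseteq E_i$ be given. Let $\mathcal Q=\{Q\in\mathbb R^{N\times N}: Q_i\in D_i\ \forall i\in S\}$, where $Q_i$ is the $i$-th row of $Q$ and $q_{ij}$ its entries. For $Q\in\mathcal Q$, $X=(X_t)_{t\ge0}$ is a time-homogeneous continuous-time Markov chain on $S$ with generator $Q$, and $\mathbb E_{i,Q}$ (or $\mathbb E_i$) is the expectation given $X_0=i$. A payoff function $f$ assigns a real number $f(t,i,\mathbf q)$ to each $t\ge0$, $i\in S$, $\mathbf q\in D_i$. Conditions: (C) $t\mapsto f(t,i,\mathbf q)$ is continuous on $[0,\infty)$ for each $i,\mathbf q$; (I) $\int_0^\infty\sup_{i\in S,\mathbf q\in D_i,\|\mathbf q\|\le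 c}|f(t,i,\mathbf q)|\,dt<\infty$ for every $c>0$ (Euclidean norm). Define $F(i,Q)=\mathbb E_{i,Q}[\int_0^\infty f(t,X_t,Q_{X_t})dt]$, $F(Q)=(F(1,Q),\dots,F(N,Q))$, and for $\varepsilon>0$, $F_\varepsilon(i,Q)=\mathbb E_{i,Q}[\int_0^\infty f(t+\varepsilon,X_t,Q_{X_t})dt]$, $F_\varepsilon(Q)=(F_\varepsilon(1,Q),\dots,F_\varepsilon(N,Q))$. For $Q,Q'\in\mathcal Q$ and $\varepsilon>0$, $Q\otimes_\varepsilon Q'$ means that $X$ evolves with generator $Q$ on $[0,\varepsilon]$ and with generator $Q'$ on $(\varepsilon,\infty)$; $F(i,Q\otimes_\varepsilon Q')=\mathbb E_i[\int_0^\varepsilon f(t,X_t,Q_{X_t})dt+\int_\varepsilon^\infty f(t,X_t,Q'_{X_t})dt]$ with $X_0=i$. For $Q^*\in\mathcal Q$, $i\in S$, $\mathbf q\in D_i$, put $\Gamma^{Q^*}_i(\mathbf q)=f(0,i,\mathbf q)+\mathbf q\cdot F(Q^* )$. Condition (H): there is a nonnegative function $h(t,\varepsilon;i,\mathbf q)$ with $|f(t+\varepsilon,i,\mathbf q)-f(t,i,\mathbf q)|\le h(t,\varepsilon;i,\mathbf q)$ for all $t\ge0,\varepsilon>0,i\in S,\mathbf q\in D_i$, such that $h$ is nondecreasing in $\varepsilon$, $\lim_{\varepsilon\downarrow0}h(t,\varepsilon;i,\mathbf q)=0$, and $\int_0^\infty h(t,\varepsilon;i,\mathbf q)dt<\infty$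 for all sufficiently small $\varepsilon>0$. *)

(* Defs.v *)
From Stdlib Require Import Reals Lra Lia List ClassicalEpsilon.
Open Scope R_scope.

(* States S = {1,..,N} are encoded as 0,..,N-1.  Rows / matrices are functions
   nat -> R / nat -> nat -> R; only indices < N are meaningful. *)

Fixpoint sumN (n : nat) (g : nat -> R) : R :=
  match n with O => 0 | S m => sumN m g + g m end.

Definition InE (N i : nat) (q : nat -> R) : Prop :=
  (forall j, (j < N)%nat -> j <> i -> 0 <= q j) /\
  q i = - sumN N (fun j => if Nat.eq_dec j i then 0 else q j).

Definition rnorm (N : nat) (q : nat -> R) : R := sqrt (sumN N (fun j => q j * q j)).

Definition InQ (N : nat) (D : nat -> (nat -> R) -> Prop) (Q : nat -> nat -> R) : Prop :=
  forall i, (i < N)%nat -> D i (Q i).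

(* limit of a real sequence (chosen via classical choice; meaningful when it converges) *)
Definition lim_seq (u : nat -> R) : R := epsilon (inhabits 0) (fun l => Un_cv u l).

Fixpoint Qpow (N : nat) (Q : nat -> nat -> R) (n : nat) : nat -> nat -> R :=
  match n with
  | O => fun i j => if Nat.eq_dec i j then 1 else 0
  | S m => fun i j => sumN N (fun k => Qpow N Q m i k * Q k j)
  end.

Definition Ptrans (N : nat) (Q : nat -> nat -> R) (t : R) (i j : nat) : R :=
  lim_seq (fun m => sum_f_R0 (fun n => t ^ n / INR (Factorial.fact n) * Qpow N Q n i j) m).

(* transition function of the chain with generator Q on [0,eps] and Q' afterwards *)
Definition Pswitch (N : nat) (eps : R) (Q Q' : nat -> nat -> R) (t : R) (i j : nat) : R :=
  if Rle_dec t eps then Ptrans N Q t i j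
  else sumN N (fun k => Ptrans N Q eps i k * Ptrans N Q' (t - eps) k j).

(* Riemann integral as a value (meaningful when g is Riemann integrable on [a,b]) *)
Definition RInt (g : R -> R) (a b : R) : R :=
  epsilon (inhabits 0) (fun l => exists pr : Riemann_integrable g a b, RiemannInt pr = l).

Definition IntInfProp (g : R -> R) (l : R) : Prop :=
  (forall T, 0 <= T -> exists _ : Riemann_integrable g 0 T, True) /\
  (forall e, 0 < e -> exists M, forall T, M <= T -> Rabs (RInt g 0 T - l) < e).

Definition IntInf (g : R -> R) : R := epsilon (inhabits 0) (IntInfProp g).

Section Payoff.
Variables (N : nat) (f : R -> nat -> (nat -> R) -> R).

(* F(i,Q) = E_{i,Q}[ int_0^oo f(t,X_t,Q_{X_t}) dt ] *)
Definition Fval (Q : nat -> nat -> R) (i : nat) : R :=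
  IntInf (fun t => sumN N (fun j => Ptrans N Q t i j * f t j (Q j))).

(* F_eps(i,Q) = E_{i,Q}[ int_0^oo f(t+eps,X_t,Q_{X_t}) dt ] *)
Definition Feps (eps : R) (Q : nat -> nat -> R) (i : nat) : R :=
  IntInf (fun t => sumN N (fun j => Ptrans N Q t i j * f (t + eps) j (Q j))).

Definition Fswitch (eps : R) (Q Q' : nat -> nat -> R) (i : nat) : R :=
  IntInf (fun t => sumN N (fun j =>
     Pswitch N eps Q Q' t i j * f t j (if Rle_dec t eps then Q j else Q' j))).

Definition Gamma (Qs : nat -> nat -> R) (i : nat) (q : nat -> R) : R :=
  f 0 i q + sumN N (fun j => q j * Fval Qs j).
End Payoff.

Definition condC (N : nat) (D : nat -> (nat -> R) -> Prop) (f : R -> nat -> (nat -> R) -> R) : Prop :=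
  forall i q, (i < N)%nat -> D i q ->
  forall t0, 0 <= t0 -> forall e, 0 < e -> exists d, 0 < d /\
    forall t, 0 <= t -> Rabs (t - t0) < d -> Rabs (f t i q - f t0 i q) < e.

Definition maxabs (f : R -> nat -> (nat -> R) -> R) (l : list (nat * (nat -> R))) (t : R) : R :=
  fold_right (fun p acc => Rmax (Rabs (f t (fst p) (snd p))) acc) 0 l.

(* condition (I): int_0^oo sup_{i, q in D_i, |q|<=c} |f(t,i,q)| dt < oo.
   Under (C) the supremum is lower semicontinuous, so its (Lebesgue) integral is the
   supremum of the integrals of maxima over finite subfamilies (monotone convergence). *)
Definition condI (N : nat) (D : nat -> (nat -> R) -> Prop) (f : R -> nat -> (nat -> R) -> R) : Prop :=
  forall c, 0 < c -> exists B,
    forall l, Forall (fun p => (fst p < N)%nat /\ D (fst p) (snd p) /\ rnorm N (snd p) <= c) l ->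
    forall T, 0 <= T -> RInt (maxabs f l) 0 T <= B.

(* "int_0^oo h(t) dt < oo" for a nonnegative function h: the lower integral
   (sup of integrals of Riemann-integrable minorants) is finite. *)
Definition LowerIntFinite (h : R -> R) : Prop :=
  exists B, forall (phi : R -> R) T, 0 <= T ->
    (forall t, 0 <= t <= T -> 0 <= phi t <= h t) ->
    forall pr : Riemann_integrable phi 0 T, RiemannInt pr <= B.

Definition condH (N : nat) (D : nat -> (nat -> R) -> Prop) (f : R -> nat -> (nat -> R) -> R) : Prop :=
  exists h : R -> R -> nat -> (nat -> R) -> R,
    (forall t e i q, 0 <= t -> 0 < e -> (i < N)%nat -> D i q ->
       0 <= h t e i q /\ Rabs (f (t + e) i q - f t i q) <= h t e i q) /\
    (forall t e1 e2 i q, 0 <= t -> 0 < e1 -> e1 <= e2 -> (i < N)%nat -> D i q ->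
       h t e1 i q <= h t e2 i q) /\
    (forall t i q, 0 <= t -> (i < N)%nat -> D i q ->
       forall eta, 0 < eta -> exists d, 0 < d /\
         forall e, 0 < e < d -> Rabs (h t e i q) < eta) /\
    (forall i q, (i < N)%nat -> D i q -> exists e0, 0 < e0 /\
       forall e, 0 < e < e0 -> LowerIntFinite (fun t => h t e i q)).

(* Main.v *)
Require Import Defs.
From Stdlib Require Import Reals Lra Lia List ClassicalEpsilon FunctionalExtensionality.
From Coquelicot Require Import Coquelicot.
Open Scope R_scope.

Lemma sumN_ext n g h : (forall j, (j < n)%nat -> g j = h j) -> sumN n g = sumN n h.
Proof. induction n; simpl; intros H; auto. rewrite IHn; [rewrite H|]; auto; intros; apply H; lia. Qed.

Lemma sumN_plus n g h : sumN n (fun j => g j + h j) = sumN n g + sumN n h.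
Proof. induction n; simpl; [lra|rewrite IHn; lra]. Qed.

Lemma sumN_minus n g h : sumN n (fun j => g j - h j) = sumN n g - sumN n h.
Proof. induction n; simpl; [lra|rewrite IHn; lra]. Qed.

Lemma sumN_scal n c g : sumN n (fun j => c * g j) = c * sumN n g.
Proof. induction n; simpl; [lra|rewrite IHn; lra]. Qed.

Lemma sumN_scalr n c g : sumN n (fun j => g j * c) = sumN n g * c.
Proof. induction n; simpl; [lra|rewrite IHn; lra]. Qed.

Lemma sumN_0 n : sumN n (fun _ => 0) = 0.
Proof. induction n; simpl; [lra|rewrite IHn; lra]. Qed.

Lemma sumN_swap n m (g : nat -> nat -> R) :
  sumN n (fun a => sumN m (fun b => g a b)) = sumN m (fun b => sumN n (fun a => g a b)).
Proof.
  induction n; simpl. { rewrite sumN_0; auto. }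
  rewrite IHn, <- sumN_plus; auto.
Qed.

Lemma sumN_abs n g : Rabs (sumN n g) <= sumN n (fun j => Rabs (g j)).
Proof. induction n; simpl. { rewrite Rabs_R0; lra. }
  eapply Rle_trans; [apply Rabs_triang|lra]. Qed.

Lemma sumN_le n g h : (forall j, (j < n)%nat -> g j <= h j) -> sumN n g <= sumN n h.
Proof. induction n; simpl; intros H; [lra|]. assert (g n <= h n) by (apply H; lia).
  assert (sumN n g <= sumN n h) by (apply IHn; intros; apply H; lia). lra. Qed.

Lemma sumN_nonneg n g : (forall j, (j < n)%nat -> 0 <= g j) -> 0 <= sumN n g.
Proof. intros H. rewrite <- (sumN_0 n). apply sumN_le; auto. Qed.

Lemma sumN_delta n k g : (k < n)%nat ->
  sumN n (fun j => (if Nat.eq_dec k j then 1 else 0) * g j) = g k.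
Proof.
  induction n; intros H; simpl; [lia|].
  destruct (Nat.eq_dec k n).
  - subst. rewrite (sumN_ext _ _ (fun _ => 0)), sumN_0; [lra|].
    intros j Hj; destruct (Nat.eq_dec n j); [lia|lra].
  - rewrite IHn; [lra|lia].
Qed.

Lemma sumN_delta' n k g : (k < n)%nat ->
  sumN n (fun j => g j * (if Nat.eq_dec j k then 1 else 0)) = g k.
Proof.
  intros H. rewrite <- (sumN_delta n k g H). apply sumN_ext; intros j _.
  destruct (Nat.eq_dec j k), (Nat.eq_dec k j); subst; try lia; lra.
Qed.

Lemma sumN_split_at n k q : (k < n)%nat ->
  sumN n q = sumN n (fun j => if Nat.eq_dec j k then 0 else q j) + q k.
Proof.
  induction n; intros H; simpl; [lia|].
  destruct (Nat.eq_dec n k).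
  - subst. rewrite (sumN_ext _ (fun j => if Nat.eq_dec j k then 0 else q j) q); [lra|].
    intros j Hj; destruct (Nat.eq_dec j k); [lia|auto].
  - rewrite IHn; [lra|lia].
Qed.

Lemma InE_sum N i q : (i < N)%nat -> InE N i q -> sumN N q = 0.
Proof. intros H [_ H2]. rewrite (sumN_split_at N i q H). lra. Qed.

Lemma sum_f_R0_sumN g n : sum_f_R0 g n = sumN (S n) g.
Proof. induction n; simpl; [lra|]. rewrite IHn; simpl; lra. Qed.

Lemma sumN_shift m g : sumN (S m) g = g O + sumN m (fun a => g (S a)).
Proof. induction m; simpl in *; [lra|]. rewrite IHm; lra. Qed.

Lemma sumN_const n c : sumN n (fun _ => c) = INR n * c.
Proof. induction n; simpl sumN; [simpl; ring|]. rewrite IHn, S_INR; ring. Qed.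

Lemma Qpow_add N M a b i j : (j < N)%nat ->
  Qpow N M (a + b) i j = sumN N (fun k => Qpow N M a i k * Qpow N M b k j).
Proof.
  intros Hj. induction b as [|b IH] in j, Hj |- *.
  - rewrite Nat.add_0_r. simpl. rewrite sumN_delta'; auto.
  - rewrite Nat.add_succ_r. simpl.
    rewrite (sumN_ext _ _ (fun k => sumN N (fun l => Qpow N M a i l * Qpow N M b l k * M k j))).
    2:{ intros k Hk. rewrite IH by auto. rewrite <- sumN_scalr. apply sumN_ext; intros; lra. }
    rewrite sumN_swap. apply sumN_ext; intros l _. rewrite <- sumN_scal. apply sumN_ext; intros; lra.
Qed.

Lemma Qpow_bound N M K : 0 <= K -> (forall k j, (k < N)%nat -> (j < N)%nat -> Rabs (M k j) <= K) ->
  forall n i j, (j < N)%nat -> Rabs (Qpow N M n i j) <= (INR N * K)^n.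
Proof.
  intros HK HM n. induction n; intros i j Hj; simpl.
  - destruct (Nat.eq_dec i j); rewrite ?Rabs_R1, ?Rabs_R0; lra.
  - eapply Rle_trans; [apply sumN_abs|].
    eapply Rle_trans.
    + apply (sumN_le _ _ (fun _ => (INR N * K)^n * K)). intros k Hk.
      rewrite Rabs_mult. apply Rmult_le_compat; auto using Rabs_pos.
    + rewrite sumN_const. right; ring.
Qed.

Lemma Qpow_nonneg N A : (forall k j, (k < N)%nat -> (j < N)%nat -> 0 <= A k j) ->
  forall n i j, (j < N)%nat -> 0 <= Qpow N A n i j.
Proof.
  intros HA n; induction n; intros i j Hj; simpl.
  - destruct (Nat.eq_dec i j); lra.
  - apply sumN_nonneg; intros k Hk. apply Rmult_le_pos; auto.
Qed.

Lemma Qpow_rowsum N M : (forall k, (k < N)%nat -> sumN N (M k) = 0) ->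
  forall n i, sumN N (fun j => Qpow N M (S n) i j) = 0.
Proof.
  intros HM n i. simpl. rewrite sumN_swap.
  rewrite (sumN_ext _ _ (fun _ => 0)); [apply sumN_0|].
  intros k Hk. rewrite sumN_scal, HM; auto; lra.
Qed.

Lemma Qpow_rowsum0 N M i : (i < N)%nat -> sumN N (fun j => Qpow N M 0 i j) = 1.
Proof. intros H. simpl. transitivity (sumN N (fun j => (if Nat.eq_dec i j then 1 else 0) * 1)); [apply sumN_ext; intros j _; destruct (Nat.eq_dec i j); lra|apply sumN_delta; auto]. Qed.

Notation C := Binomial.C.

Lemma pascal_shift (x : nat -> R) y n :
  sum_f_R0 (fun a => C n a * y^(n-a) * x (S a)) n + y * sum_f_R0 (fun a => C n a * y^(n-a) * x a) n
  = sum_f_R0 (fun a => C (S n) a * y^(S n - a) * x a) (S n).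
Proof.
  rewrite !sum_f_R0_sumN.
  assert (E1 : sumN (S n) (fun a => C n a * y^(n-a) * x (S a)) =
     sumN (S (S n)) (fun a => (match a with O => 0 | S b => C n b end) * y^(S n - a) * x a)).
  { rewrite (sumN_shift (S n)). simpl (match O with O => 0 | _ => _ end). rewrite Rmult_0_l, Rmult_0_l, Rplus_0_l.
    apply sumN_ext; intros; f_equal. }
  assert (E2 : y * sumN (S n) (fun a => C n a * y^(n-a) * x a) =
     sumN (S (S n)) (fun a => (if Nat.leb a n then C n a else 0) * y^(S n - a) * x a)).
  { rewrite <- sumN_scal. change (sumN (S (S n)) ?g) with (sumN (S n) g + g (S n)).
    cbv beta. replace (S n <=? n)%nat with false by (symmetry; apply Nat.leb_gt; lia). rewrite Rmult_0_l, Rmult_0_l, Rplus_0_r.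
    apply sumN_ext; intros a Ha. rewrite (proj2 (Nat.leb_le a n)) by lia.
    replace (S n - a)%nat with (S (n - a)) by lia. simpl; ring. }
  rewrite E1, E2, <- sumN_plus. apply sumN_ext; intros a Ha.
  rewrite <- !Rmult_plus_distr_r. f_equal. f_equal.
  destruct a as [|b].
  - simpl. rewrite !Rplus_0_l. unfold C. rewrite !Nat.sub_0_r. field. repeat split; apply INR_fact_neq_0.
  - destruct (Nat.leb (S b) n) eqn:Hb.
    + apply Nat.leb_le in Hb. apply pascal. lia.
    + apply Nat.leb_gt in Hb. assert (b = n) by lia. subst. rewrite Rplus_0_r.
      unfold C. rewrite !Nat.sub_diag. field; repeat split; apply INR_fact_neq_0.
Qed.

Definition shiftM (M : nat -> nat -> R) (c : R) : nat -> nat -> R :=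
  fun a b => M a b + c * (if Nat.eq_dec a b then 1 else 0).

Lemma Qpow_binom N M c : forall n i j, (j < N)%nat ->
  Qpow N M n i j = sum_f_R0 (fun a => C n a * (-c)^(n-a) * Qpow N (shiftM M c) a i j) n.
Proof.
  induction n; intros i j Hj.
  - simpl. unfold C. simpl. field.
  - rewrite <- pascal_shift. simpl Qpow at 1.
    rewrite (sumN_ext _ _ (fun k => Qpow N M n i k * shiftM M c k j + (-c) * (Qpow N M n i k * (if Nat.eq_dec k j then 1 else 0)))).
    2:{ intros; unfold shiftM; ring. }
    rewrite sumN_plus, sumN_scal, sumN_delta' by auto. rewrite <- IHn by auto. f_equal.
    rewrite (sumN_ext _ _ (fun k => sum_f_R0 (fun a => C n a * (-c)^(n-a) * Qpow N (shiftM M c) a i k * shiftM M c k j) n)).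
    2:{ intros k Hk. rewrite IHn by auto. rewrite <- scal_sum. ring. }
    erewrite (sumN_ext N); [|intros k _; apply sum_f_R0_sumN]. rewrite sum_f_R0_sumN, sumN_swap. apply sumN_ext; intros a _. simpl (Qpow N _ (S a) i j).
    rewrite <- sumN_scal. apply sumN_ext; intros; ring.
Qed.

Lemma lim_seq_eq u l : Un_cv u l -> lim_seq u = l.
Proof.
  intros H. unfold lim_seq.
  eapply UL_sequence; [apply (epsilon_spec (inhabits 0) (fun l => Un_cv u l) (ex_intro _ l H))|exact H].
Qed.

Lemma is_series_Un_cv a l : is_series a l -> Un_cv (sum_f_R0 a) l.
Proof. intros H. apply is_series_Reals in H. exact H. Qed.

Lemma exp_is_series x : is_series (fun n => x^n / INR (Factorial.fact n)) (exp x).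
Proof.
  apply is_series_Reals. unfold exp. destruct (exist_exp x) as [l Hl]. simpl.
  intros e He. destruct (Hl e He) as [M HM]. exists M. intros n Hn.
  rewrite (sum_eq _ (fun i => / INR (Factorial.fact i) * x ^ i)); [apply HM; auto|]. intros; unfold Rdiv; ring.
Qed.

Lemma mat_bound N (M : nat -> nat -> R) : exists K, 0 <= K /\ forall k j, (k < N)%nat -> (j < N)%nat -> Rabs (M k j) <= K.
Proof.
  exists (sumN N (fun k => sumN N (fun j => Rabs (M k j)))). split.
  - apply sumN_nonneg; intros; apply sumN_nonneg; intros; apply Rabs_pos.
  - intros k j Hk Hj.
    assert (H1 : forall n (g : nat -> R) a, (a < n)%nat -> (forall b, (b < n)%nat -> 0 <= g b) -> g a <= sumN n g).
    { induction n; intros g a Ha Hg; [lia|]. simpl. destruct (Nat.eq_dec a n).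
      - subst. assert (0 <= sumN n g) by (apply sumN_nonneg; intros; apply Hg; lia). lra.
      - assert (g a <= sumN n g) by (apply IHn; [lia|intros; apply Hg; lia]). assert (0 <= g n) by (apply Hg; lia). lra. }
    eapply Rle_trans; [|apply (H1 N _ k Hk)].
    + apply (H1 N (fun j => Rabs (M k j)) j Hj). intros; apply Rabs_pos.
    + intros; apply sumN_nonneg; intros; apply Rabs_pos.
Qed.

Definition eterm N M t n i j := t ^ n / INR (Factorial.fact n) * Qpow N M n i j.

Lemma eterm_abs N M K t i j : 0 <= K -> (forall k j, (k < N)%nat -> (j < N)%nat -> Rabs (M k j) <= K) ->
  (j < N)%nat -> ex_series (fun n => Rabs (eterm N M t n i j)).
Proof.
  intros HK HM Hj. apply (@ex_series_le R_AbsRing R_CompleteNormedModule _ (fun n => (Rabs t * (INR N * K))^n / INR (Factorial.fact n))).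
  - intros n. change (norm (Rabs (eterm N M t n i j))) with (Rabs (Rabs (eterm N M t n i j))). rewrite Rabs_Rabsolu.
    unfold eterm. rewrite Rabs_mult.
    assert (0 <= Rabs t ^ n * / INR (Factorial.fact n)) by
      (apply Rmult_le_pos; [apply pow_le, Rabs_pos|apply Rlt_le, Rinv_0_lt_compat, INR_fact_lt_0]).
    assert (Rabs (Qpow N M n i j) <= (INR N * K)^n) by (eapply Qpow_bound; eauto).
    replace (Rabs (t ^ n / INR (Factorial.fact n))) with (Rabs t ^ n * / INR (Factorial.fact n)).
    2:{ unfold Rdiv. rewrite Rabs_mult, RPow_abs, (Rabs_right (/ _)); auto.
        apply Rle_ge, Rlt_le, Rinv_0_lt_compat, INR_fact_lt_0. }
    replace ((Rabs t * (INR N * K)) ^ n / INR (Factorial.fact n)) with ((Rabs t ^ n * / INR (Factorial.fact n)) * (INR N * K) ^ n)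
      by (rewrite !Rpow_mult_distr; unfold Rdiv; ring).
    apply Rmult_le_compat_l; auto.
  - eexists; apply exp_is_series.
Qed.

Lemma Ptrans_series N M K t i j : 0 <= K -> (forall k j, (k < N)%nat -> (j < N)%nat -> Rabs (M k j) <= K) ->
  (j < N)%nat -> is_series (fun n => eterm N M t n i j) (Ptrans N M t i j).
Proof.
  intros HK HM Hj. pose proof (ex_series_Rabs _ (eterm_abs N M K t i j HK HM Hj)) as Hex.
  pose proof (Series_correct _ Hex) as Hs.
  unfold Ptrans. rewrite (lim_seq_eq _ (Series (fun n => eterm N M t n i j))); auto.
  apply is_series_Un_cv in Hs. exact Hs.
Qed.

Lemma is_series_sumN (g : nat -> nat -> R) (l : nat -> R) n :
  (forall k, (k < n)%nat -> is_series (g k) (l k)) ->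
  is_series (fun m => sumN n (fun k => g k m)) (sumN n l).
Proof.
  induction n; intros H; simpl.
  - apply is_series_Reals. intros e He. exists O. intros m _. 
    rewrite sum_cte. unfold Rdist. rewrite Rmult_0_l, Rminus_0_r, Rabs_R0. lra.
  - apply (is_series_plus (fun m => sumN n (fun k => g k m)) (g n)); auto.
Qed.

Lemma series_uniq (a : nat -> R) (l1 l2 : R) : is_series a l1 -> is_series a l2 -> l1 = l2.
Proof. intros H1 H2. rewrite <- (is_series_unique _ _ H1). apply is_series_unique; auto. Qed.

Lemma C_fact n a : (a <= n)%nat -> Binomial.C n a / INR (Factorial.fact n) = / INR (Factorial.fact a) * / INR (Factorial.fact (n - a)).
Proof. intros. unfold Binomial.C. field. repeat split; apply INR_fact_neq_0. Qed.

Lemma Ptrans_add N M s t i j : (j < N)%nat ->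
  Ptrans N M (s + t) i j = sumN N (fun k => Ptrans N M s i k * Ptrans N M t k j).
Proof.
  intros Hj. destruct (mat_bound N M) as [K [HK HM]].
  assert (H := is_series_sumN (fun k n => sum_f_R0 (fun a => eterm N M s a i k * eterm N M t (n - a) k j) n)
        (fun k => Ptrans N M s i k * Ptrans N M t k j) N).
  eapply series_uniq; [apply (Ptrans_series N M K); auto|].
  eapply is_series_ext; [|apply H].
  2:{ intros k Hk. cbv beta. apply (is_series_mult (fun a => eterm N M s a i k) (fun b => eterm N M t b k j) (Ptrans N M s i k) (Ptrans N M t k j)); [apply (Ptrans_series N M K)|apply (Ptrans_series N M K)|apply (eterm_abs N M K)|apply (eterm_abs N M K)]; auto. }
  intros n. simpl.
  erewrite (sumN_ext N); [|intros k _; apply sum_f_R0_sumN]. rewrite sumN_swap.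
  rewrite (sumN_ext (S n) _ (fun a => s^a / INR (Factorial.fact a) * (t^(n-a) / INR (Factorial.fact (n-a))) * Qpow N M n i j)).
  2:{ intros a Ha. unfold eterm. replace n with (a + (n - a))%nat at 3 by lia. rewrite Qpow_add by auto.
      rewrite <- sumN_scal. apply sumN_ext; intros; ring. }
  rewrite sumN_scalr. unfold eterm. f_equal.
  rewrite binomial. unfold Rdiv. rewrite Rmult_comm, scal_sum, sum_f_R0_sumN. apply sumN_ext; intros a Ha.
  replace (C n a * s^a * t^(n-a) * / INR (Factorial.fact n)) with ((C n a / INR (Factorial.fact n)) * s^a * t^(n-a)) by (unfold Rdiv; ring). rewrite C_fact by lia. ring.
Qed.

Lemma series_abs_le (a b : nat -> R) (l lb : R) : is_series a l -> is_series b lb ->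
  (forall n, Rabs (a n) <= b n) -> Rabs l <= lb.
Proof.
  intros Ha Hb H. apply is_series_Un_cv in Ha. apply is_series_Un_cv in Hb.
  apply Rabs_le. split.
  - assert (- lb <= l); [|lra].
    apply Rle_cv_lim with (Un := fun n => - sum_f_R0 b n) (Vn := sum_f_R0 a); auto.
    + intros n. rewrite !sum_f_R0_sumN. rewrite <- (Rmult_1_l (sumN _ b)), Ropp_mult_distr_l, <- sumN_scal.
      apply sumN_le. intros j _. specialize (H j).
      assert (HH := Rle_abs (- a j)). rewrite Rabs_Ropp in HH. lra.
    + apply (CV_opp _ _ Hb).
  - apply Rle_cv_lim with (Un := sum_f_R0 a) (Vn := sum_f_R0 b); auto.
    intros n. rewrite !sum_f_R0_sumN. apply sumN_le. intros j _. specialize (H j). pose proof (Rle_abs (a j)). lra.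
Qed.

Lemma series_nonneg (a : nat -> R) (l : R) : is_series a l -> (forall n, 0 <= a n) -> 0 <= l.
Proof.
  intros Ha H. apply is_series_Un_cv in Ha.
  apply Rle_cv_lim with (Un := fun _ => 0) (Vn := sum_f_R0 a); auto.
  - intros n. rewrite sum_f_R0_sumN. apply sumN_nonneg; auto.
  - intros e He. exists O. intros. unfold Rdist. rewrite Rminus_0_r, Rabs_R0; lra.
Qed.

Lemma series_first2 (a : nat -> R) : (forall n, a (S (S n)) = 0) -> is_series a (a O + a 1%nat).
Proof.
  intros H. apply is_series_Reals. intros e He. exists 1%nat. intros n Hn.
  replace (sum_f_R0 a n) with (a O + a 1%nat).
  - unfold Rdist. rewrite Rminus_diag_eq, Rabs_R0; auto.
  - induction n; [lia|]. destruct n; [simpl; ring|]. rewrite tech5, <- IHn by lia. rewrite H; ring.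
Qed.

Lemma pow0S n : 0 ^ S n = 0.
Proof. simpl; ring. Qed.

Lemma eterm0 N M i j : eterm N M 0 O i j = if Nat.eq_dec i j then 1 else 0.
Proof. unfold eterm. simpl. field. Qed.

Lemma eterm1 N M t i j : (i < N)%nat -> eterm N M t 1 i j = t * M i j.
Proof. intros Hi. unfold eterm. simpl Qpow. rewrite sumN_delta by auto. simpl. field. Qed.

Lemma Ptrans_0 N M i j : (j < N)%nat -> Ptrans N M 0 i j = if Nat.eq_dec i j then 1 else 0.
Proof.
  intros Hj. destruct (mat_bound N M) as [K [HK HM]].
  eapply series_uniq; [apply (Ptrans_series N M K); auto|].
  assert (E : eterm N M 0 1 i j = 0) by (unfold eterm; unfold Rdiv; rewrite pow_i by lia; ring).
  assert (H := series_first2 (fun n => eterm N M 0 n i j)). cbv beta in H. rewrite E, eterm0, Rplus_0_r in H.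
  apply H. intros n. unfold eterm. rewrite pow_i by lia. unfold Rdiv; ring.
Qed.

Lemma Ptrans_rowsum N M t i : (i < N)%nat -> (forall k, (k < N)%nat -> sumN N (M k) = 0) ->
  sumN N (fun j => Ptrans N M t i j) = 1.
Proof.
  intros Hi HM0. destruct (mat_bound N M) as [K [HK HM]].
  eapply series_uniq; [apply (is_series_sumN (fun j n => eterm N M t n i j)); intros; apply (Ptrans_series N M K); auto|].
  replace 1 with (sumN N (fun j => eterm N M t 0 i j) + sumN N (fun j => eterm N M t 1 i j)).
  - apply (series_first2 (fun n => sumN N (fun j => eterm N M t n i j))). intros n. unfold eterm.
    rewrite sumN_scal. rewrite Qpow_rowsum; auto. ring.
  - unfold eterm. rewrite !sumN_scal. rewrite Qpow_rowsum, Qpow_rowsum0; auto. simpl; field.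
Qed.

Lemma Ptrans_nonneg N M t i j : 0 <= t -> (j < N)%nat ->
  (forall k j, (k < N)%nat -> (j < N)%nat -> k <> j -> 0 <= M k j) -> 0 <= Ptrans N M t i j.
Proof.
  intros Ht Hj Hoff. destruct (mat_bound N M) as [K [HK HM]].
  set (A := shiftM M K).
  assert (HA : forall k j, (k < N)%nat -> (j < N)%nat -> 0 <= A k j).
  { intros k l Hk Hl. unfold A, shiftM. destruct (Nat.eq_dec k l).
    - subst. specialize (HM l l Hl Hl). apply Rabs_le_between' in HM || idtac.
      pose proof (Rle_abs (- M l l)) as HH. rewrite Rabs_Ropp in HH. lra.
    - specialize (Hoff k l Hk Hl n). lra. }
  destruct (mat_bound N A) as [KA [HKA HMA]].
  assert (Hprod : Ptrans N M t i j = Ptrans N A t i j * exp (- K * t)).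
  { eapply series_uniq; [apply (Ptrans_series N M K); auto|].
    eapply is_series_ext; [|apply (is_series_mult (fun a => eterm N A t a i j) (fun b => (- K * t)^b / INR (Factorial.fact b)))].
    - intros n. cbv beta. unfold eterm. rewrite (Qpow_binom N M K) by auto.
      rewrite scal_sum. rewrite !sum_f_R0_sumN. apply sumN_ext; intros a Ha.
      fold A. rewrite Rpow_mult_distr.
      replace (t ^ n) with (t ^ a * t ^ (n - a)) by (rewrite <- pow_add; f_equal; lia).
      transitivity ((C n a / INR (Factorial.fact n)) * (- K) ^ (n - a) * Qpow N A a i j * (t ^ a * t ^ (n - a)));
        [|unfold Rdiv; ring].
      rewrite C_fact by lia. unfold Rdiv. ring.
    - apply (Ptrans_series N A KA); auto.
    - apply exp_is_series.
    - apply (eterm_abs N A KA); auto.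
    - eapply ex_series_ext; [|eexists; apply (exp_is_series (Rabs (- K * t)))].
      intros n. unfold Rdiv. rewrite (Rabs_mult ((- K * t) ^ n)), RPow_abs, (Rabs_right (/ _)); auto.
      apply Rle_ge, Rlt_le, Rinv_0_lt_compat, INR_fact_lt_0. }
  rewrite Hprod. apply Rmult_le_pos; [|apply Rlt_le, exp_pos].
  apply (series_nonneg (fun n => eterm N A t n i j)); [apply (Ptrans_series N A KA); auto|].
  intros n. unfold eterm. apply Rmult_le_pos; [|apply Qpow_nonneg; auto].
  apply Rmult_le_pos; [apply pow_le; auto|apply Rlt_le, Rinv_0_lt_compat, INR_fact_lt_0].
Qed.

Definition Gen N (M : nat -> nat -> R) :=
  (forall k j, (k < N)%nat -> (j < N)%nat -> k <> j -> 0 <= M k j) /\ (forall k, (k < N)%nat -> sumN N (M k) = 0).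

Lemma Gen_of_InQ N D M : (forall i q, (i < N)%nat -> D i q -> InE N i q) -> InQ N D M -> Gen N M.
Proof.
  intros HD HQ. split.
  - intros k j Hk Hj Hkj. destruct (HD k (M k) Hk (HQ k Hk)) as [H _]. apply H; auto.
  - intros k Hk. apply (InE_sum N k); auto.
Qed.

Lemma is_series_minusR (a b : nat -> R) (la lb : R) : is_series a la -> is_series b lb ->
  is_series (fun n => a n - b n) (la - lb).
Proof. intros Ha Hb. exact (is_series_minus a b la lb Ha Hb). Qed.

Lemma is_series_scalR (c : R) (a : nat -> R) (l : R) : is_series a l -> is_series (fun n => c * a n) (c * l).
Proof. intros Ha. exact (is_series_scal_l c a l Ha). Qed.

Lemma pow_le1' t n : 0 <= t <= 1 -> t ^ n <= 1.
Proof. intros H. induction n; simpl; [lra|]. assert (0 <= t ^ n) by (apply pow_le; lra). nra. Qed.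

Lemma eterm_bound N M K t n i j : 0 <= K -> (forall k j, (k < N)%nat -> (j < N)%nat -> Rabs (M k j) <= K) ->
  (j < N)%nat -> Rabs (eterm N M t n i j) <= Rabs t ^ n * (INR N * K) ^ n / INR (Factorial.fact n).
Proof.
  intros HK HM Hj. unfold eterm. rewrite Rabs_mult.
  assert (0 <= Rabs t ^ n * / INR (Factorial.fact n)) by
    (apply Rmult_le_pos; [apply pow_le, Rabs_pos|apply Rlt_le, Rinv_0_lt_compat, INR_fact_lt_0]).
  assert (Rabs (Qpow N M n i j) <= (INR N * K)^n) by (eapply Qpow_bound; eauto).
  replace (Rabs (t ^ n / INR (Factorial.fact n))) with (Rabs t ^ n * / INR (Factorial.fact n)).
  2:{ unfold Rdiv. rewrite Rabs_mult, RPow_abs, (Rabs_right (/ _)); auto.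
      apply Rle_ge, Rlt_le, Rinv_0_lt_compat, INR_fact_lt_0. }
  replace (Rabs t ^ n * (INR N * K) ^ n / INR (Factorial.fact n)) with ((Rabs t ^ n * / INR (Factorial.fact n)) * (INR N * K) ^ n)
    by (unfold Rdiv; ring).
  apply Rmult_le_compat_l; auto.
Qed.

Lemma Ptrans_near N M K t i j : 0 <= K -> (forall k j, (k < N)%nat -> (j < N)%nat -> Rabs (M k j) <= K) ->
  (i < N)%nat -> (j < N)%nat -> 0 <= t <= 1 ->
  Rabs (Ptrans N M t i j - (if Nat.eq_dec i j then 1 else 0) - t * M i j) <= t ^ 2 * exp (INR N * K).
Proof.
  intros HK HM Hi Hj Ht.
  set (r := fun n => match n with O => (if Nat.eq_dec i j then 1 else 0) | 1%nat => t * M i j | _ => 0 end).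
  assert (Hr : is_series r ((if Nat.eq_dec i j then 1 else 0) + t * M i j)) by (apply (series_first2 r); intros; reflexivity).
  assert (H1 := is_series_minusR _ _ _ _ (Ptrans_series N M K t i j HK HM Hj) Hr).
  assert (H2 := is_series_scalR (t ^ 2) _ _ (exp_is_series (INR N * K))).
  replace (Ptrans N M t i j - (if Nat.eq_dec i j then 1 else 0) - t * M i j) with
    (Ptrans N M t i j - ((if Nat.eq_dec i j then 1 else 0) + t * M i j)) by ring.
  eapply series_abs_le; [apply H1|apply H2|]. intros n. cbv beta.
  assert (Hpos : forall m, 0 <= t ^ 2 * ((INR N * K) ^ m / INR (Factorial.fact m))).
  { intros m. apply Rmult_le_pos; [apply pow_le; lra|]. apply Rmult_le_pos; [|apply Rlt_le, Rinv_0_lt_compat, INR_fact_lt_0].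
    apply pow_le. apply Rmult_le_pos; [apply pos_INR|auto]. }
  destruct n as [|[|n]]; simpl r.
  - replace (eterm N M t 0 i j) with (if Nat.eq_dec i j then 1 else 0) by (unfold eterm; simpl; destruct (Nat.eq_dec i j); field).
    rewrite Rminus_diag_eq, Rabs_R0 by auto. apply Hpos.
  - rewrite eterm1 by auto. rewrite Rminus_diag_eq, Rabs_R0 by auto. apply Hpos.
  - rewrite Rminus_0_r. eapply Rle_trans; [apply (eterm_bound N M K); auto|].
    rewrite Rabs_right by lra.
    replace (t ^ S (S n)) with (t ^ 2 * t ^ n) by (simpl; ring).
    assert (0 <= t ^ n <= 1) by (split; [apply pow_le; lra|apply pow_le1'; lra]).
    assert (0 <= (INR N * K) ^ S (S n) / INR (Factorial.fact (S (S n)))).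
    { apply Rmult_le_pos; [apply pow_le, Rmult_le_pos; [apply pos_INR|auto]|apply Rlt_le, Rinv_0_lt_compat, INR_fact_lt_0]. }
    assert (0 <= t ^ 2) by (apply pow_le; lra).
    unfold Rdiv in *. 
    replace (t ^ 2 * t ^ n * (INR N * K) ^ S (S n) * / INR (Factorial.fact (S (S n)))) with
      (t ^ 2 * ((INR N * K) ^ S (S n) * / INR (Factorial.fact (S (S n)))) * t ^ n) by ring.
    rewrite <- (Rmult_1_r (t ^ 2 * ((INR N * K) ^ S (S n) * / INR (Factorial.fact (S (S n)))))) at 2.
    apply Rmult_le_compat_l; [apply Rmult_le_pos|]; lra.
Qed.

Lemma Ptrans_lip N M K : 0 <= K -> (forall k j, (k < N)%nat -> (j < N)%nat -> Rabs (M k j) <= K) -> Gen N M ->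
  forall t h i j, (i < N)%nat -> (j < N)%nat -> 0 <= t -> 0 <= h <= 1 ->
  Rabs (Ptrans N M (t + h) i j - Ptrans N M t i j) <= (K + exp (INR N * K)) * h.
Proof.
  intros HK HM [Hoff Hsum] t h i j Hi Hj Ht Hh.
  rewrite Ptrans_add by auto.
  rewrite <- (sumN_delta' N j (fun k => Ptrans N M t i k)) by auto.
  rewrite <- sumN_minus.
  eapply Rle_trans; [apply sumN_abs|].
  eapply Rle_trans; [apply (sumN_le _ _ (fun k => Ptrans N M t i k * ((K + exp (INR N * K)) * h)))|].
  - intros k Hk. rewrite <- Rmult_minus_distr_l, Rabs_mult, Rabs_right by (apply Rle_ge, Ptrans_nonneg; auto).
    apply Rmult_le_compat_l; [apply Ptrans_nonneg; auto|].
    assert (H := Ptrans_near N M K h k j HK HM Hk Hj Hh).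
    assert (H2 := HM k j Hk Hj).
    assert (Rabs (h * M k j) <= h * K) by (rewrite Rabs_mult, Rabs_right by lra; apply Rmult_le_compat_l; lra).
    assert (h ^ 2 * exp (INR N * K) <= h * exp (INR N * K)).
    { apply Rmult_le_compat_r; [apply Rlt_le, exp_pos|]. simpl. nra. }
    pose proof (Rabs_triang (Ptrans N M h k j - (if Nat.eq_dec k j then 1 else 0) - h * M k j) (h * M k j)).
    replace (Ptrans N M h k j - (if Nat.eq_dec k j then 1 else 0) - h * M k j + h * M k j) with
       (Ptrans N M h k j - (if Nat.eq_dec k j then 1 else 0)) in * by ring.
    lra.
  - rewrite sumN_scalr, Ptrans_rowsum by auto. lra.
Qed.

Definition cont0 (g : R -> R) : Prop :=
  forall t0, 0 <= t0 -> forall e, 0 < e -> exists d, 0 < d /\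
    forall t, 0 <= t -> Rabs (t - t0) < d -> Rabs (g t - g t0) < e.

Lemma cont0_const c : cont0 (fun _ => c).
Proof. intros t0 _ e He. exists 1. split; [lra|]. intros. rewrite Rminus_diag_eq, Rabs_R0; auto. Qed.

Lemma cont0_plus g h : cont0 g -> cont0 h -> cont0 (fun t => g t + h t).
Proof.
  intros Hg Hh t0 Ht0 e He. destruct (Hg t0 Ht0 (e/2)) as [d1 [Hd1 H1]]; [lra|].
  destruct (Hh t0 Ht0 (e/2)) as [d2 [Hd2 H2]]; [lra|].
  exists (Rmin d1 d2). split; [apply Rmin_pos; auto|]. intros t Ht Htd.
  assert (Rabs (t - t0) < d1) by (eapply Rlt_le_trans; [apply Htd|apply Rmin_l]).
  assert (Rabs (t - t0) < d2) by (eapply Rlt_le_trans; [apply Htd|apply Rmin_r]).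
  specialize (H1 t Ht H). specialize (H2 t Ht H0).
  replace (g t + h t - (g t0 + h t0)) with ((g t - g t0) + (h t - h t0)) by ring.
  eapply Rle_lt_trans; [apply Rabs_triang|lra].
Qed.

Lemma cont0_opp g : cont0 g -> cont0 (fun t => - g t).
Proof.
  intros Hg t0 Ht0 e He. destruct (Hg t0 Ht0 e He) as [d [Hd H]]. exists d; split; auto.
  intros t Ht Htd. replace (- g t - - g t0) with (- (g t - g t0)) by ring. rewrite Rabs_Ropp; auto.
Qed.

Lemma cont0_mult g h : cont0 g -> cont0 h -> cont0 (fun t => g t * h t).
Proof.
  intros Hg Hh t0 Ht0 e He.
  set (A := Rabs (g t0) + 1). set (B := Rabs (h t0) + 1).
  assert (HA : 0 < A) by (unfold A; pose proof (Rabs_pos (g t0)); lra).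
  assert (HB : 0 < B) by (unfold B; pose proof (Rabs_pos (h t0)); lra).
  set (p := e / (2 * B)). set (q := e / (2 * A)).
  assert (Hp : 0 < p) by (apply Rdiv_lt_0_compat; lra).
  assert (Hq : 0 < q) by (apply Rdiv_lt_0_compat; lra).
  assert (HpB : p * B = e / 2) by (unfold p; field; lra).
  assert (HqA : A * q = e / 2) by (unfold q; field; lra).
  destruct (Hg t0 Ht0 (Rmin 1 p)) as [d1 [Hd1 H1]]; [apply Rmin_pos; lra|].
  destruct (Hh t0 Ht0 q Hq) as [d2 [Hd2 H2]].
  exists (Rmin d1 d2). split; [apply Rmin_pos; auto|]. intros t Ht Htd.
  assert (Rabs (t - t0) < d1) by (eapply Rlt_le_trans; [apply Htd|apply Rmin_l]).
  assert (Rabs (t - t0) < d2) by (eapply Rlt_le_trans; [apply Htd|apply Rmin_r]).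
  specialize (H1 t Ht H). specialize (H2 t Ht H0).
  assert (X : Rabs (g t - g t0) < p) by (eapply Rlt_le_trans; [apply H1|apply Rmin_r]).
  assert (X1 : Rabs (g t - g t0) < 1) by (eapply Rlt_le_trans; [apply H1|apply Rmin_l]).
  assert (Y : Rabs (h t0) < B) by (unfold B; lra).
  assert (Z : Rabs (g t) < A).
  { unfold A. replace (g t) with ((g t - g t0) + g t0) by ring. eapply Rle_lt_trans; [apply Rabs_triang|]. lra. }
  replace (g t * h t - g t0 * h t0) with ((g t - g t0) * h t0 + g t * (h t - h t0)) by ring.
  eapply Rle_lt_trans; [apply Rabs_triang|]. rewrite !Rabs_mult.
  pose proof (Rabs_pos (g t - g t0)). pose proof (Rabs_pos (h t0)). pose proof (Rabs_pos (g t)). pose proof (Rabs_pos (h t - h t0)).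
  assert (Rabs (g t - g t0) * Rabs (h t0) < p * B) by nra.
  assert (Rabs (g t) * Rabs (h t - h t0) <= A * q) by nra.
  lra.
Qed.

Lemma cont0_minus g h : cont0 g -> cont0 h -> cont0 (fun t => g t - h t).
Proof. intros. apply (cont0_plus g (fun t => - h t)); auto. apply cont0_opp; auto. Qed.

Lemma cont0_sumN n (g : nat -> R -> R) : (forall j, (j < n)%nat -> cont0 (g j)) ->
  cont0 (fun t => sumN n (fun j => g j t)).
Proof.
  induction n; intros H; simpl.
  - apply cont0_const.
  - apply (cont0_plus (fun t => sumN n (fun j => g j t)) (g n)); [apply IHn; intros; apply H; lia|apply H; lia].
Qed.

Lemma cont0_abs g : cont0 g -> cont0 (fun t => Rabs (g t)).
Proof.
  intros Hg t0 Ht0 e He. destruct (Hg t0 Ht0 e He) as [d [Hd H]]. exists d; split; auto.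
  intros t Ht Htd. eapply Rle_lt_trans; [apply Rabs_triang_inv2|]. auto.
Qed.

Lemma cont0_Rmax g h : cont0 g -> cont0 h -> cont0 (fun t => Rmax (g t) (h t)).
Proof.
  intros Hg Hh t0 Ht0 e He. destruct (Hg t0 Ht0 e He) as [d1 [Hd1 H1]].
  destruct (Hh t0 Ht0 e He) as [d2 [Hd2 H2]].
  exists (Rmin d1 d2). split; [apply Rmin_pos; auto|]. intros t Ht Htd.
  assert (Rabs (t - t0) < d1) by (eapply Rlt_le_trans; [apply Htd|apply Rmin_l]).
  assert (Rabs (t - t0) < d2) by (eapply Rlt_le_trans; [apply Htd|apply Rmin_r]).
  specialize (H1 t Ht H). specialize (H2 t Ht H0).
  apply Rabs_def1; unfold Rmax; destruct (Rle_dec (g t) (h t)), (Rle_dec (g t0) (h t0));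
    apply Rabs_def2 in H1; apply Rabs_def2 in H2; lra.
Qed.

Lemma cont0_shift g s : 0 <= s -> cont0 g -> cont0 (fun t => g (t + s)).
Proof.
  intros Hs Hg t0 Ht0 e He. destruct (Hg (t0 + s)) with (e := e) as [d [Hd H]]; [lra|auto|].
  exists d; split; auto. intros t Ht Htd. apply H; [lra|]. replace (t + s - (t0 + s)) with (t - t0) by ring. auto.
Qed.

Lemma cont0_lip g L : 0 <= L -> (forall t h, 0 <= t -> 0 <= h <= 1 -> Rabs (g (t + h) - g t) <= L * h) -> cont0 g.
Proof.
  intros HL H t0 Ht0 e He. exists (Rmin 1 (e / (L + 1))). split.
  { apply Rmin_pos; [lra|apply Rdiv_lt_0_compat; lra]. }
  intros t Ht Htd. assert (Hd1 : Rmin 1 (e / (L + 1)) <= 1) by apply Rmin_l.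
  assert (Hd2 : Rmin 1 (e / (L + 1)) <= e / (L + 1)) by apply Rmin_r.
  assert (Hle : L * (e / (L + 1)) < e).
  { replace (L * (e / (L + 1))) with (e * (L / (L + 1))) by (field; lra).
    assert (L / (L + 1) < 1) by (apply Rmult_lt_reg_r with (L + 1); [lra|]; unfold Rdiv; rewrite Rmult_assoc, Rinv_l; lra).
    nra. }
  destruct (Rle_dec t0 t).
  - specialize (H t0 (t - t0)). replace (t0 + (t - t0)) with t in H by ring.
    rewrite Rabs_right in Htd by lra.
    eapply Rle_lt_trans; [apply H; lra|]. eapply Rle_lt_trans; [|apply Hle]. apply Rmult_le_compat_l; lra.
  - specialize (H t (t0 - t)). replace (t + (t0 - t)) with t0 in H by ring.
    rewrite Rabs_left in Htd by lra. rewrite Rabs_minus_sym.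
    eapply Rle_lt_trans; [apply H; lra|]. eapply Rle_lt_trans; [|apply Hle]. apply Rmult_le_compat_l; lra.
Qed.

Lemma Rmax0_lip x z : Rabs (Rmax 0 x - Rmax 0 z) <= Rabs (x - z).
Proof. unfold Rmax; destruct (Rle_dec 0 x), (Rle_dec 0 z); unfold Rabs; repeat destruct Rcase_abs; lra. Qed.

Lemma cont0_continuous g : cont0 g -> forall z, continuous (fun t => g (Rmax 0 t)) z.
Proof.
  intros Hg z. apply continuity_pt_filterlim.
  intros e He. destruct (Hg (Rmax 0 z) (Rmax_l 0 z) e He) as [d [Hd H]].
  exists d. split; auto. intros x [_ Hx]. unfold R_dist in *. simpl in *. unfold Rdist in *.
  apply H; [apply Rmax_l|]. eapply Rle_lt_trans; [apply Rmax0_lip|apply Hx].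
Qed.

Lemma cont0_ex_RInt g a b : cont0 g -> 0 <= a -> a <= b -> ex_RInt g a b.
Proof.
  intros Hg Ha Hab. apply ex_RInt_ext with (fun t => g (Rmax 0 t)).
  - intros x Hx. rewrite Rmin_left, Rmax_right in Hx by lra. rewrite Rmax_right by lra. auto.
  - apply (@ex_RInt_continuous R_CompleteNormedModule). intros; apply cont0_continuous; auto.
Qed.

Lemma RInt_plusR (f g : R -> R) a b : ex_RInt f a b -> ex_RInt g a b ->
  RInt (fun x => f x + g x) a b = RInt f a b + RInt g a b.
Proof. intros H1 H2. exact (RInt_plus f g a b H1 H2). Qed.

Lemma ex_RInt_plusR (f g : R -> R) a b : ex_RInt f a b -> ex_RInt g a b -> ex_RInt (fun x => f x + g x) a b.
Proof. intros H1 H2. exact (ex_RInt_plus f g a b H1 H2). Qed.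

Lemma RInt_minusR (f g : R -> R) a b : ex_RInt f a b -> ex_RInt g a b ->
  RInt (fun x => f x - g x) a b = RInt f a b - RInt g a b.
Proof. intros H1 H2. exact (RInt_minus f g a b H1 H2). Qed.

Lemma ex_RInt_minusR (f g : R -> R) a b : ex_RInt f a b -> ex_RInt g a b -> ex_RInt (fun x => f x - g x) a b.
Proof. intros H1 H2. exact (ex_RInt_minus f g a b H1 H2). Qed.

Lemma RInt_scalR (f : R -> R) a b c : ex_RInt f a b -> RInt (fun x => c * f x) a b = c * RInt f a b.
Proof. intros H1. exact (RInt_scal f a b c H1). Qed.

Lemma ex_RInt_scalR (f : R -> R) a b c : ex_RInt f a b -> ex_RInt (fun x => c * f x) a b.
Proof. intros H1. exact (ex_RInt_scal f a b c H1). Qed.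

Lemma RInt_ChaslesR (f : R -> R) a b c : ex_RInt f a b -> ex_RInt f b c -> RInt f a b + RInt f b c = RInt f a c.
Proof. intros H1 H2. exact (RInt_Chasles f a b c H1 H2). Qed.

Lemma RInt_constR a b (c : R) : RInt (fun _ => c) a b = (b - a) * c.
Proof. exact (RInt_const a b c). Qed.

Lemma RInt_shift (f : R -> R) a b s : ex_RInt f (a + s) (b + s) ->
  RInt (fun t => f (t + s)) a b = RInt f (a + s) (b + s) /\ ex_RInt (fun t => f (t + s)) a b.
Proof.
  intros H. replace (a + s) with (1 * a + s) in H by ring. replace (b + s) with (1 * b + s) in H by ring.
  assert (E : forall y, scal 1 (f (1 * y + s)) = f (y + s)).
  { intros y. change (scal 1 (f (1 * y + s))) with (1 * f (1 * y + s)). rewrite !Rmult_1_l. auto. }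
  split.
  - transitivity (RInt (fun y => scal 1 (f (1 * y + s))) a b).
    { apply RInt_ext; intros; symmetry; apply E. }
    replace (a + s) with (1 * a + s) by ring. replace (b + s) with (1 * b + s) by ring.
    exact (RInt_comp_lin f 1 s a b H).
  - eapply ex_RInt_ext; [|apply ex_RInt_comp_lin; apply H]. intros; apply E.
Qed.

Lemma RInt_abs_le (g m : R -> R) a b : a <= b -> ex_RInt g a b -> ex_RInt m a b ->
  (forall t, a < t < b -> Rabs (g t) <= m t) -> Rabs (RInt g a b) <= RInt m a b.
Proof.
  intros Hab Hg Hm H. apply Rabs_le. split.
  - assert (RInt (fun t => - g t) a b <= RInt m a b).
    { apply RInt_le; auto. apply (ex_RInt_ext (fun t => (-1) * g t)); [intros x _; change ((-1) * g x = - g x); ring|]. apply ex_RInt_scalR; auto.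
      intros t Ht. specialize (H t Ht). pose proof (Rle_abs (- g t)). rewrite Rabs_Ropp in *. lra. }
    rewrite (RInt_ext _ (fun t => (-1) * g t)) in H0 by (intros x _; change (- g x = (-1) * g x); ring). rewrite RInt_scalR in H0 by auto. lra.
  - apply RInt_le; auto. intros t Ht. specialize (H t Ht). pose proof (Rle_abs (g t)). lra.
Qed.

Lemma RInt_eqD g a b : ex_RInt g a b -> Defs.RInt g a b = RInt g a b.
Proof.
  intros H. pose proof (ex_RInt_Reals_0 _ _ _ H) as pr.
  unfold Defs.RInt.
  destruct (epsilon_spec (inhabits 0) (fun l => exists pr : Riemann_integrable g a b, RiemannInt pr = l)
     (ex_intro _ (RiemannInt pr) (ex_intro _ pr eq_refl))) as [pr' Hpr'].
  rewrite <- Hpr'. symmetry. apply RInt_Reals.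
Qed.

Lemma lim_mono (F : R -> R) B : (forall s t, 0 <= s <= t -> F s <= F t) -> (forall t, 0 <= t -> F t <= B) ->
  exists l, forall e, 0 < e -> exists M, 0 <= M /\ forall T, M <= T -> Rabs (F T - l) < e.
Proof.
  intros Hmono HB.
  set (E := fun x => exists t, 0 <= t /\ x = F t).
  assert (Hb : bound E) by (exists B; intros x [t [Ht ->]]; auto).
  assert (Hne : exists x, E x) by (exists (F 0); exists 0; split; [lra|auto]).
  destruct (completeness E Hb Hne) as [l [Hub Hlub]].
  exists l. intros e He.
  destruct (classic (exists t, 0 <= t /\ l - e < F t)) as [[t0 [Ht0 Hlt]]|Hno].
  - exists t0. split; auto. intros T HT.
    assert (F t0 <= F T) by (apply Hmono; lra). assert (F T <= l) by (apply Hub; exists T; split; [lra|auto]).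
    apply Rabs_def1; lra.
  - exfalso. assert (l <= l - e); [|lra]. apply Hlub. intros x [t [Ht ->]].
    destruct (Rle_dec (F t) (l - e)); auto. exfalso; apply Hno; exists t; split; auto; lra.
Qed.

Lemma IntInf_eq g l : IntInfProp g l -> IntInf g = l.
Proof.
  intros H. unfold IntInf. assert (H' := epsilon_spec (inhabits 0) (IntInfProp g) (ex_intro _ l H)).
  set (l' := epsilon (inhabits 0) (IntInfProp g)) in *.
  destruct H as [_ H]. destruct H' as [_ H'].
  destruct (Req_dec l' l) as [|Hne]; auto. exfalso.
  set (e := Rabs (l' - l) / 2). assert (He : 0 < e) by (unfold e; apply Rdiv_lt_0_compat; [apply Rabs_pos_lt; lra|lra]).
  destruct (H e He) as [M1 H1]. destruct (H' e He) as [M2 H2].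
  specialize (H1 (Rmax M1 M2) (Rmax_l _ _)). specialize (H2 (Rmax M1 M2) (Rmax_r _ _)).
  assert (Rabs (l' - l) <= Rabs (Defs.RInt g 0 (Rmax M1 M2) - l) + Rabs (Defs.RInt g 0 (Rmax M1 M2) - l')).
  { replace (l' - l) with ((Defs.RInt g 0 (Rmax M1 M2) - l) - (Defs.RInt g 0 (Rmax M1 M2) - l')) by ring.
    apply Rabs_triang_gen || (eapply Rle_trans; [apply Rabs_triang|rewrite Rabs_Ropp; lra]). }
  unfold e in *. lra.
Qed.

Lemma improper_exists (g m : R -> R) B :
  (forall T, 0 <= T -> ex_RInt g 0 T) -> (forall T, 0 <= T -> ex_RInt m 0 T) ->
  (forall t, 0 <= t -> Rabs (g t) <= m t) -> (forall T, 0 <= T -> RInt m 0 T <= B) ->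
  exists l, IntInfProp g l /\ Rabs l <= B.
Proof.
  intros Hg Hm Hgm HB.
  assert (Hsub : forall (h : R -> R) s t, 0 <= s <= t -> (forall T, 0 <= T -> ex_RInt h 0 T) -> ex_RInt h s t).
  { intros h s t Hst Hh. apply (ex_RInt_Chasles_2 h 0); [lra|apply Hh; lra]. }
  assert (Hmono : forall (h : R -> R), (forall T, 0 <= T -> ex_RInt h 0 T) -> (forall t, 0 <= t -> 0 <= h t) ->
     forall s t, 0 <= s <= t -> RInt h 0 s <= RInt h 0 t).
  { intros h Hh Hpos s t Hst. rewrite <- (RInt_ChaslesR h 0 s t); [|apply Hh; lra|apply Hsub; auto].
    assert (0 <= RInt h s t); [|lra]. apply RInt_ge_0; [lra|apply Hsub; auto|]. intros; apply Hpos; lra. }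
  assert (Hgm' : forall T, 0 <= T -> ex_RInt (fun t => g t + m t) 0 T) by (intros; apply ex_RInt_plusR; auto).
  destruct (lim_mono (fun T => RInt (fun t => g t + m t) 0 T) (2 * B)) as [l1 H1].
  { apply Hmono; auto. intros t Ht. specialize (Hgm t Ht). pose proof (Rle_abs (- g t)). rewrite Rabs_Ropp in *. lra. }
  { intros t Ht. rewrite RInt_plusR by auto. assert (RInt g 0 t <= RInt m 0 t).
    { pose proof (RInt_abs_le g m 0 t Ht (Hg t Ht) (Hm t Ht)) as HH. assert (Rabs (RInt g 0 t) <= RInt m 0 t) by (apply HH; intros; apply Hgm; lra).
      pose proof (Rle_abs (RInt g 0 t)). lra. }
    specialize (HB t Ht). lra. }
  destruct (lim_mono (fun T => RInt m 0 T) B) as [l2 H2].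
  { apply Hmono; auto. intros t Ht. specialize (Hgm t Ht). pose proof (Rabs_pos (g t)). lra. }
  { auto. }
  assert (Hlim : forall e, 0 < e -> exists M, 0 <= M /\ forall T, M <= T -> Rabs (RInt g 0 T - (l1 - l2)) < e).
  { intros e He. destruct (H1 (e/2)) as [M1 [HM1 HH1]]; [lra|]. destruct (H2 (e/2)) as [M2 [HM2 HH2]]; [lra|].
    exists (Rmax M1 M2). split; [eapply Rle_trans; [apply HM1|apply Rmax_l]|]. intros T HT.
    assert (M1 <= T) by (eapply Rle_trans; [apply Rmax_l|apply HT]).
    assert (M2 <= T) by (eapply Rle_trans; [apply Rmax_r|apply HT]).
    specialize (HH1 T H). specialize (HH2 T H0). rewrite RInt_plusR in HH1 by (apply Hg || apply Hm; lra).
    replace (RInt g 0 T - (l1 - l2)) with ((RInt g 0 T + RInt m 0 T - l1) - (RInt m 0 T - l2)) by ring.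
    eapply Rle_lt_trans; [apply Rabs_triang|]. rewrite Rabs_Ropp. lra. }
  exists (l1 - l2). split.
  - split.
    + intros T HT. exists (ex_RInt_Reals_0 _ _ _ (Hg T HT)). auto.
    + intros e He. destruct (Hlim e He) as [M [HM HH]]. exists M. intros T HT.
      rewrite RInt_eqD by (apply Hg; lra). auto.
  - destruct (Rle_dec (Rabs (l1 - l2)) B) as [|Hn]; auto. exfalso.
    destruct (Hlim (Rabs (l1 - l2) - B)) as [M [HM HH]]; [lra|].
    specialize (HH M (Rle_refl _)).
    assert (Rabs (RInt g 0 M) <= B).
    { eapply Rle_trans; [apply (RInt_abs_le g m 0 M HM (Hg M HM) (Hm M HM))|apply HB; auto]. intros; apply Hgm; lra. }
    assert (Rabs (l1 - l2) <= Rabs (RInt g 0 M) + Rabs (RInt g 0 M - (l1 - l2))).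
    { replace (l1 - l2) with (RInt g 0 M - (RInt g 0 M - (l1 - l2))) at 1 by ring.
      eapply Rle_trans; [apply Rabs_triang|]. rewrite Rabs_Ropp. lra. }
    lra.
Qed.

Definition IIP (g : R -> R) (l : R) : Prop :=
  (forall T, 0 <= T -> ex_RInt g 0 T) /\
  (forall e, 0 < e -> exists M, 0 <= M /\ forall T, M <= T -> Rabs (RInt g 0 T - l) < e).

Lemma IIP_of g l : IntInfProp g l -> IIP g l.
Proof.
  intros [H1 H2]. assert (Hex : forall T, 0 <= T -> ex_RInt g 0 T).
  { intros T HT. destruct (H1 T HT) as [pr _]. apply ex_RInt_Reals_1; auto. }
  split; auto. intros e He. destruct (H2 e He) as [M HM]. exists (Rmax 0 M). split; [apply Rmax_l|].
  intros T HT. assert (0 <= T) by (eapply Rle_trans; [apply Rmax_l|apply HT]).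
  rewrite <- RInt_eqD by auto. apply HM. eapply Rle_trans; [apply Rmax_r|apply HT].
Qed.

Lemma IIP_to g l : IIP g l -> IntInfProp g l.
Proof.
  intros [H1 H2]. split.
  - intros T HT. exists (ex_RInt_Reals_0 _ _ _ (H1 T HT)). auto.
  - intros e He. destruct (H2 e He) as [M [HM HH]]. exists M. intros T HT.
    rewrite RInt_eqD by (apply H1; lra). auto.
Qed.

Lemma IIP_IntInf g l : IIP g l -> IntInf g = l.
Proof. intros H. apply IntInf_eq, IIP_to; auto. Qed.

Lemma IIP_plus g1 g2 l1 l2 : IIP g1 l1 -> IIP g2 l2 -> IIP (fun t => g1 t + g2 t) (l1 + l2).
Proof.
  intros [E1 H1] [E2 H2]. split; [intros; apply ex_RInt_plusR; auto|].
  intros e He. destruct (H1 (e/2)) as [M1 [HM1 HH1]]; [lra|]. destruct (H2 (e/2)) as [M2 [HM2 HH2]]; [lra|].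
  exists (Rmax M1 M2). split; [eapply Rle_trans; [apply HM1|apply Rmax_l]|]. intros T HT.
  assert (M1 <= T) by (eapply Rle_trans; [apply Rmax_l|apply HT]).
  assert (M2 <= T) by (eapply Rle_trans; [apply Rmax_r|apply HT]).
  specialize (HH1 T H). specialize (HH2 T H0). rewrite RInt_plusR by (apply E1 || apply E2; lra).
  replace (RInt g1 0 T + RInt g2 0 T - (l1 + l2)) with ((RInt g1 0 T - l1) + (RInt g2 0 T - l2)) by ring.
  eapply Rle_lt_trans; [apply Rabs_triang|lra].
Qed.

Lemma IIP_scal c g l : IIP g l -> IIP (fun t => c * g t) (c * l).
Proof.
  intros [E1 H1]. split; [intros; apply ex_RInt_scalR; auto|].
  intros e He. destruct (H1 (e / (Rabs c + 1))) as [M [HM HH]].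
  { apply Rdiv_lt_0_compat; [lra|pose proof (Rabs_pos c); lra]. }
  exists M. split; auto. intros T HT. rewrite RInt_scalR by (apply E1; lra).
  rewrite <- Rmult_minus_distr_l, Rabs_mult. specialize (HH T HT).
  apply Rle_lt_trans with (Rabs c * (e / (Rabs c + 1))).
  - apply Rmult_le_compat_l; [apply Rabs_pos|lra].
  - pose proof (Rabs_pos c). replace (Rabs c * (e / (Rabs c + 1))) with (e * (Rabs c / (Rabs c + 1))) by (field; lra).
    assert (Rabs c / (Rabs c + 1) < 1) by (apply Rmult_lt_reg_r with (Rabs c + 1); [lra|]; unfold Rdiv; rewrite Rmult_assoc, Rinv_l; lra).
    nra.
Qed.

Lemma IIP_ext g1 g2 l : IIP g1 l -> (forall t, 0 < t -> g1 t = g2 t) -> IIP g2 l.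
Proof.
  intros [E1 H1] Heq.
  assert (HR : forall T, 0 <= T -> RInt g1 0 T = RInt g2 0 T).
  { intros T HT. apply RInt_ext. intros x Hx. rewrite Rmin_left in Hx by lra. apply Heq; lra. }
  split.
  - intros T HT. apply (ex_RInt_ext g1); [|apply E1; auto]. intros x Hx. rewrite Rmin_left in Hx by lra. apply Heq; lra.
  - intros e He. destruct (H1 e He) as [M [HM HH]]. exists M; split; auto. intros T HT. rewrite <- HR by lra. auto.
Qed.

Lemma IIP_sumN n (c : nat -> R) (g : nat -> R -> R) (l : nat -> R) :
  (forall k, (k < n)%nat -> IIP (g k) (l k)) ->
  IIP (fun t => sumN n (fun k => c k * g k t)) (sumN n (fun k => c k * l k)).
Proof.
  induction n; intros H; simpl.
  - split; [intros; apply ex_RInt_const|]. intros e He. exists 0. split; [lra|]. intros T HT.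
    rewrite RInt_constR, Rmult_0_r, Rminus_0_r, Rabs_R0. auto.
  - apply (IIP_plus (fun t => sumN n (fun k => c k * g k t)) (fun t => c n * g n t)).
    + apply IHn; intros; apply H; lia.
    + apply IIP_scal, H; lia.
Qed.

Lemma IIP_diff_bound g1 g2 l1 l2 c : IIP g1 l1 -> IIP g2 l2 ->
  (forall T, 0 <= T -> Rabs (RInt g1 0 T - RInt g2 0 T) <= c) -> Rabs (l1 - l2) <= c.
Proof.
  intros [E1 H1] [E2 H2] H. destruct (Rle_dec (Rabs (l1 - l2)) c) as [|Hn]; auto. exfalso.
  set (e := (Rabs (l1 - l2) - c) / 2).
  destruct (H1 e) as [M1 [HM1 HH1]]; [unfold e; lra|]. destruct (H2 e) as [M2 [HM2 HH2]]; [unfold e; lra|].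
  set (T := Rmax M1 M2). assert (0 <= T) by (eapply Rle_trans; [apply HM1|apply Rmax_l]).
  specialize (HH1 T (Rmax_l _ _)). specialize (HH2 T (Rmax_r _ _)). specialize (H T H0).
  assert (Rabs (l1 - l2) <= Rabs (RInt g1 0 T - l1) + Rabs (RInt g2 0 T - l2) + Rabs (RInt g1 0 T - RInt g2 0 T)).
  { replace (l1 - l2) with (- (RInt g1 0 T - l1) + (RInt g2 0 T - l2) + (RInt g1 0 T - RInt g2 0 T)) by ring.
    eapply Rle_trans; [apply Rabs_triang|]. rewrite <- (Rabs_Ropp (RInt g1 0 T - l1)).
    pose proof (Rabs_triang (- (RInt g1 0 T - l1)) (RInt g2 0 T - l2)). lra. }
  unfold e in *. lra.
Qed.

Lemma IIP_bound g l B : IIP g l -> (forall T, 0 <= T -> Rabs (RInt g 0 T) <= B) -> Rabs l <= B.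
Proof.
  intros Hg H. replace l with (l - 0) by ring.
  apply (IIP_diff_bound g (fun _ => 0)); auto.
  - split; [intros; apply ex_RInt_const|]. intros e He; exists 0; split; [lra|]; intros.
    rewrite RInt_constR, Rmult_0_r, Rminus_0_r, Rabs_R0; auto.
  - intros T HT. rewrite RInt_constR, Rmult_0_r, Rminus_0_r. auto.
Qed.

Lemma IIP_decomp e (chi u w : R -> R) W : 0 < e -> cont0 u -> IIP w W ->
  (forall t, 0 <= t <= e -> chi t = u t) -> (forall t, e < t -> chi t = w (t - e)) ->
  IIP chi (RInt u 0 e + W).
Proof.
  intros He Hu [Ew Hw] H1 H2.
  assert (Hc1 : forall T, 0 <= T <= e -> ex_RInt chi 0 T).
  { intros T HT. apply (ex_RInt_ext u); [|apply cont0_ex_RInt; auto; lra].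
    intros x Hx. rewrite Rmin_left, Rmax_right in Hx by lra. symmetry; apply H1; lra. }
  assert (Hc2 : forall T, e <= T -> ex_RInt chi e T /\ RInt chi e T = RInt w 0 (T - e)).
  { intros T HT. destruct (RInt_shift w e T (- e)) as [R1 R2].
    { replace (e + - e) with 0 by ring. apply Ew; lra. }
    replace (e + - e) with 0 in R1 by ring. replace (T + - e) with (T - e) in R1 by ring.
    assert (Hext : forall x, Rmin e T < x < Rmax e T -> w (x + - e) = chi x).
    { intros x Hx. rewrite Rmin_left, Rmax_right in Hx by lra. rewrite H2 by lra. f_equal; ring. }
    split.
    - apply (ex_RInt_ext _ _ _ _ Hext R2).
    - rewrite <- R1. symmetry. apply RInt_ext. auto. }
  assert (Hsplit : forall T, e <= T -> RInt chi 0 T = RInt u 0 e + RInt w 0 (T - e)).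
  { intros T HT. destruct (Hc2 T HT) as [X1 X2]. rewrite <- (RInt_ChaslesR chi 0 e T); [|apply Hc1; lra|auto].
    rewrite X2. f_equal. apply RInt_ext. intros x Hx. rewrite Rmin_left, Rmax_right in Hx by lra. apply H1; lra. }
  split.
  - intros T HT. destruct (Rle_dec T e). { apply Hc1; lra. }
    apply (ex_RInt_Chasles chi 0 e T); [apply Hc1; lra|apply Hc2; lra].
  - intros eps Heps. destruct (Hw eps Heps) as [M [HM HH]]. exists (M + e). split; [lra|].
    intros T HT. rewrite Hsplit by lra. replace (RInt u 0 e + RInt w 0 (T - e) - (RInt u 0 e + W)) with (RInt w 0 (T - e) - W) by ring.
    apply HH. lra.
Qed.

Lemma sumN_ge_term n (g : nat -> R) a : (a < n)%nat -> (forall b, (b < n)%nat -> 0 <= g b) -> g a <= sumN n g.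
Proof.
  induction n; intros Ha Hg; [lia|]. simpl. destruct (Nat.eq_dec a n).
  - subst. assert (0 <= sumN n g) by (apply sumN_nonneg; intros; apply Hg; lia). lra.
  - assert (g a <= sumN n g) by (apply IHn; [lia|intros; apply Hg; lia]). assert (0 <= g n) by (apply Hg; lia). lra.
Qed.

Lemma P_bounds N M t k j : Gen N M -> 0 <= t -> (k < N)%nat -> (j < N)%nat ->
  0 <= Ptrans N M t k j <= 1.
Proof.
  intros [Hoff Hsum] Ht Hk Hj. assert (0 <= Ptrans N M t k j) by (apply Ptrans_nonneg; auto).
  split; auto. rewrite <- (Ptrans_rowsum N M t k) by auto.
  apply (sumN_ge_term N (fun j => Ptrans N M t k j)); auto. intros; apply Ptrans_nonneg; auto.
Qed.

Lemma cont0_P N M k j : Gen N M -> (k < N)%nat -> (j < N)%nat -> cont0 (fun t => Ptrans N M t k j).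
Proof.
  intros HG Hk Hj. destruct (mat_bound N M) as [K [HK HM]].
  apply (cont0_lip _ (K + exp (INR N * K))). { pose proof (exp_pos (INR N * K)); lra. }
  intros t h Ht Hh. apply (Ptrans_lip N M K); auto.
Qed.

Lemma RInt_sumN n (g : nat -> R -> R) a b : (forall j, (j < n)%nat -> ex_RInt (g j) a b) ->
  RInt (fun t => sumN n (fun j => g j t)) a b = sumN n (fun j => RInt (g j) a b) /\
  ex_RInt (fun t => sumN n (fun j => g j t)) a b.
Proof.
  induction n; intros H; simpl.
  - rewrite RInt_constR. split; [ring|apply ex_RInt_const].
  - destruct IHn as [E1 E2]; [intros; apply H; lia|]. split.
    + rewrite RInt_plusR; [rewrite E1; auto|auto|apply H; lia].
    + apply ex_RInt_plusR; [auto|apply H; lia].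
Qed.

Lemma RInt_le_constR (h : R -> R) a b c : a <= b -> ex_RInt h a b -> (forall t, a < t < b -> h t <= c) ->
  RInt h a b <= (b - a) * c.
Proof.
  intros Hab Hh H. rewrite <- RInt_constR. apply RInt_le; auto. apply ex_RInt_const.
Qed.

Lemma IIP_expect N M k (gj : nat -> R -> R) (mm : R -> R) B : Gen N M -> (k < N)%nat ->
  (forall j, (j < N)%nat -> cont0 (gj j)) -> cont0 mm ->
  (forall j t, (j < N)%nat -> 0 <= t -> Rabs (gj j t) <= mm t) ->
  (forall T, 0 <= T -> RInt mm 0 T <= B) ->
  exists l, IIP (fun t => sumN N (fun j => Ptrans N M t k j * gj j t)) l /\ Rabs l <= B.
Proof.
  intros HG Hk Hg Hm Hgm HB.
  assert (Hc : cont0 (fun t => sumN N (fun j => Ptrans N M t k j * gj j t))).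
  { apply (cont0_sumN N (fun j t => Ptrans N M t k j * gj j t)). intros j Hj.
    apply (cont0_mult (fun t => Ptrans N M t k j)); [apply cont0_P|apply Hg]; auto. }
  destruct (improper_exists (fun t => sumN N (fun j => Ptrans N M t k j * gj j t)) mm B) as [l [Hl HlB]].
  - intros; apply cont0_ex_RInt; auto; lra.
  - intros; apply cont0_ex_RInt; auto; lra.
  - intros t Ht. eapply Rle_trans; [apply sumN_abs|].
    eapply Rle_trans; [apply (sumN_le _ _ (fun j => Ptrans N M t k j * mm t))|].
    + intros j Hj. rewrite Rabs_mult. destruct (P_bounds N M t k j) as [P0 P1]; auto.
      rewrite Rabs_right by lra. apply Rmult_le_compat_l; auto.
    + rewrite sumN_scalr. destruct HG as [Hoff Hsum]. rewrite Ptrans_rowsum by auto. lra.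
  - auto.
  - exists l. split; auto. apply IIP_of; auto.
Qed.

Lemma fin_delta n (P : nat -> R -> Prop) :
  (forall k, (k < n)%nat -> exists d, 0 < d /\ forall e, 0 < e < d -> P k e) ->
  exists d, 0 < d /\ forall k, (k < n)%nat -> forall e, 0 < e < d -> P k e.
Proof.
  induction n; intros H.
  - exists 1. split; [lra|]. intros; lia.
  - destruct IHn as [d1 [Hd1 H1]]; [intros; apply H; lia|].
    destruct (H n) as [d2 [Hd2 H2]]; [lia|].
    exists (Rmin d1 d2). split; [apply Rmin_pos; auto|]. intros k Hk e He.
    assert (e < d1) by (eapply Rlt_le_trans; [apply He|apply Rmin_l]).
    assert (e < d2) by (eapply Rlt_le_trans; [apply He|apply Rmin_r]).
    destruct (Nat.eq_dec k n); [subst; apply H2; lra|apply H1; [lia|lra]].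
Qed.

Lemma transl_cont (g mm : R -> R) B : cont0 g -> cont0 mm -> (forall t, 0 <= t -> Rabs (g t) <= mm t) ->
  (forall T, 0 <= T -> RInt mm 0 T <= B) ->
  forall eta, 0 < eta -> exists d, 0 < d /\ forall e, 0 < e < d -> forall T, 0 <= T ->
    RInt (fun t => Rabs (g (t + e) - g t)) 0 T <= eta.
Proof.
  intros Hg Hm Hgm HB eta Heta.
  assert (Hmpos : forall t, 0 <= t -> 0 <= mm t) by (intros t Ht; specialize (Hgm t Ht); pose proof (Rabs_pos (g t)); lra).
  assert (Hex : forall a b, 0 <= a -> a <= b -> ex_RInt mm a b) by (intros; apply cont0_ex_RInt; auto).
  assert (Hmono : forall s t, 0 <= s <= t -> RInt mm 0 s <= RInt mm 0 t).
  { intros s t Hst. rewrite <- (RInt_ChaslesR mm 0 s t) by (apply Hex; lra).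
    assert (0 <= RInt mm s t); [|lra]. apply RInt_ge_0; [lra|apply Hex; lra|]. intros; apply Hmpos; lra. }
  destruct (lim_mono (fun T => RInt mm 0 T) B Hmono HB) as [l Hl].
  destruct (Hl (eta / 8)) as [T0 [HT0 HH]]; [lra|].
  assert (Htail : forall S T, T0 <= S <= T -> RInt mm S T <= eta / 4).
  { intros S T HST. assert (E : RInt mm 0 S + RInt mm S T = RInt mm 0 T) by (apply RInt_ChaslesR; apply Hex; lra).
    assert (HS := HH S (proj1 HST)). assert (HT := HH T (ltac:(lra))).
    apply Rabs_def2 in HS. apply Rabs_def2 in HT. lra. }
  set (c := eta / (4 * (T0 + 1))).
  assert (Hc : 0 < c) by (unfold c; apply Rdiv_lt_0_compat; lra).
  destruct (Heine (fun t => g (Rmax 0 t)) (fun t => 0 <= t <= T0 + 1) (compact_P3 0 (T0 + 1))) with (eps := mkposreal c Hc)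
    as [[d0 Hd0] Hunif].
  { intros x Hx. apply continuity_pt_filterlim. apply cont0_continuous; auto. }
  simpl in Hunif.
  exists (Rmin 1 d0). split; [apply Rmin_pos; lra|]. intros e He T HT.
  assert (He1 : e <= 1) by (pose proof (Rmin_l 1 d0); lra).
  assert (He2 : e < d0) by (pose proof (Rmin_r 1 d0); lra).
  set (h := fun t => Rabs (g (t + e) - g t)).
  assert (Hh : cont0 h) by (apply cont0_abs, cont0_minus; [apply cont0_shift; [lra|auto]|auto]).
  assert (Hhex : forall a b, 0 <= a -> a <= b -> ex_RInt h a b) by (intros; apply cont0_ex_RInt; auto).
  assert (Hsmall : forall T', 0 <= T' <= T0 -> RInt h 0 T' <= eta / 4).
  { intros T' HT'. eapply Rle_trans; [apply (RInt_le_constR h 0 T' c); [lra|apply Hhex; lra|]|].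
    - intros t Ht. unfold h. specialize (Hunif (t + e) t). rewrite !Rmax_right in Hunif by lra.
      apply Rlt_le, Hunif; try lra. rewrite Rabs_right; lra.
    - unfold c. replace ((T' - 0) * (eta / (4 * (T0 + 1)))) with ((eta / 4) * (T' / (T0 + 1))) by (field; lra).
      assert (T' / (T0 + 1) <= 1) by (apply Rmult_le_reg_r with (T0 + 1); [lra|]; unfold Rdiv; rewrite Rmult_assoc, Rinv_l; lra).
      nra. }
  change (RInt h 0 T <= eta). destruct (Rle_dec T T0). { assert (RInt h 0 T <= eta / 4) by (apply Hsmall; lra). lra. }
  rewrite <- (RInt_ChaslesR h 0 T0 T) by (apply Hhex; lra).
  assert (RInt h 0 T0 <= eta / 4) by (apply Hsmall; lra).
  assert (RInt h T0 T <= RInt (fun t => mm (t + e) + mm t) T0 T).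
  { apply RInt_le; [lra|apply Hhex; lra| |].
    - apply ex_RInt_plusR; [|apply Hex; lra]. apply (RInt_shift mm T0 T e). apply Hex; lra.
    - intros t Ht. unfold h. eapply Rle_trans; [apply Rabs_triang|]. rewrite Rabs_Ropp.
      pose proof (Hgm (t + e)). pose proof (Hgm t). apply Rplus_le_compat; [apply H0|apply H1]; lra. }
  rewrite RInt_plusR in H0; [|apply (RInt_shift mm T0 T e); apply Hex; lra|apply Hex; lra].
  rewrite (proj1 (RInt_shift mm T0 T e ltac:(apply Hex; lra))) in H0.
  assert (RInt mm (T0 + e) (T + e) <= eta / 4) by (apply Htail; lra).
  assert (RInt mm T0 T <= eta / 4) by (apply Htail; lra).
  lra.
Qed.

Lemma maxabs_ge f l t p : In p l -> Rabs (f t (fst p) (snd p)) <= maxabs f l t.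
Proof.
  induction l as [|q l IH]; simpl; intros H; [contradiction|].
  destruct H as [->|H]; [apply Rmax_l|]. eapply Rle_trans; [apply IH; auto|apply Rmax_r].
Qed.

Lemma maxabs_nonneg f l t : 0 <= maxabs f l t.
Proof. induction l; simpl; [lra|]. eapply Rle_trans; [apply IHl|apply Rmax_r]. Qed.

Lemma cont0_maxabs f l : (forall p, In p l -> cont0 (fun t => f t (fst p) (snd p))) -> cont0 (maxabs f l).
Proof.
  induction l as [|q l IH]; simpl; intros H.
  - apply cont0_const.
  - apply (cont0_Rmax (fun t => Rabs (f t (fst q) (snd q))) (maxabs f l)).
    + apply cont0_abs. apply H; auto.
    + apply IH. intros; apply H; auto.
Qed.

Lemma A_near (u : R -> R) : cont0 u -> forall eta, 0 < eta -> exists d, 0 < d /\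
  forall e, 0 < e < d -> Rabs (RInt u 0 e - e * u 0) <= eta * e.
Proof.
  intros Hu eta Heta. destruct (Hu 0 (Rle_refl 0) eta Heta) as [d [Hd H]].
  exists d. split; auto. intros e He.
  assert (Hex : ex_RInt u 0 e) by (apply cont0_ex_RInt; auto; lra).
  replace (RInt u 0 e - e * u 0) with (RInt (fun t => u t - u 0) 0 e).
  2:{ rewrite RInt_minusR by (auto; apply ex_RInt_const). rewrite RInt_constR, Rminus_0_r. reflexivity. }
  replace (eta * e) with ((e - 0) * eta) by ring.
  apply abs_RInt_le_const; [lra|apply ex_RInt_minusR; auto; apply ex_RInt_const|].
  intros t Ht. apply Rlt_le, H; [lra|]. rewrite Rminus_0_r, Rabs_right; lra.
Qed.

Lemma D_bound N (P : nat -> R) (Mi : nat -> R) (Ff : nat -> R) C B0 i e :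
  0 <= C -> 0 <= B0 -> (forall k, (k < N)%nat -> Rabs (Ff k) <= B0) ->
  (forall k, (k < N)%nat -> Rabs (P k - (if Nat.eq_dec i k then 1 else 0) - e * Mi k) <= e ^ 2 * C) ->
  Rabs (sumN N (fun k => (P k - (if Nat.eq_dec i k then 1 else 0) - e * Mi k) * Ff k)) <= INR N * (C * B0) * e ^ 2.
Proof.
  intros HC HB HF HP. eapply Rle_trans; [apply sumN_abs|].
  eapply Rle_trans; [apply (sumN_le _ _ (fun _ => e ^ 2 * C * B0))|].
  - intros k Hk. rewrite Rabs_mult. apply Rmult_le_compat; auto using Rabs_pos.
  - rewrite sumN_const. right; ring.
Qed.

Lemma decomp_gen N f M1 Qs i e (u chi : R -> R) (F : nat -> R) : 0 < e -> cont0 u ->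
  (forall k, (k < N)%nat -> IIP (fun s => sumN N (fun j => Ptrans N Qs s k j * f (s + e) j (Qs j))) (F k)) ->
  (forall t, 0 <= t <= e -> chi t = u t) ->
  (forall t, e < t -> chi t = sumN N (fun j => sumN N (fun k => Ptrans N M1 e i k * Ptrans N Qs (t - e) k j) * f t j (Qs j))) ->
  IIP chi (RInt u 0 e + sumN N (fun k => Ptrans N M1 e i k * F k)).
Proof.
  intros He Hu HF H1 H2.
  apply (IIP_decomp e chi u (fun s => sumN N (fun k => Ptrans N M1 e i k *
        sumN N (fun j => Ptrans N Qs s k j * f (s + e) j (Qs j))))); auto.
  - apply (IIP_sumN N (fun k => Ptrans N M1 e i k) (fun k s => sumN N (fun j => Ptrans N Qs s k j * f (s + e) j (Qs j)))). auto.
  - intros t Ht. rewrite H2 by auto. replace (t - e + e) with t by ring.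
    rewrite (sumN_ext N _ (fun j => sumN N (fun k => Ptrans N M1 e i k * Ptrans N Qs (t - e) k j * f t j (Qs j)))).
    2:{ intros j _. rewrite <- sumN_scalr. auto. }
    rewrite sumN_swap. apply sumN_ext; intros k _. rewrite <- sumN_scal. apply sumN_ext; intros; ring.
Qed.

Theorem mainTheorem1
  (N : nat) (D : nat -> (nat -> R) -> Prop)
  (HD : forall i q, (i < N)%nat -> D i q -> InE N i q)
  (f : R -> nat -> (nat -> R) -> R)
  (HC : condC N D f) (HI : condI N D f)
  (i : nat) (Hi : (i < N)%nat)
  (Q Qs : nat -> nat -> R) (HQ : InQ N D Q) (HQs : InQ N D Qs) :
  (forall eta, 0 < eta -> exists d, 0 < d /\ forall e, 0 < e < d ->
     Rabs (Fswitch N f e Q Qs i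
           - (Feps N f e Qs i
              + (f 0 i (Q i) + sumN N (fun j => Feps N f e Qs j * Q i j)) * e))
     <= eta * e)
  /\
  (condH N D f ->
   forall eta, 0 < eta -> exists d, 0 < d /\ forall e, 0 < e < d ->
     Rabs ((Fval N f Qs i - Fswitch N f e Q Qs i)
           - (Gamma N f Qs i (Qs i) - Gamma N f Qs i (Q i)) * e)
     <= eta * e).
Proof.
  assert (HGQ : Gen N Q) by (eapply Gen_of_InQ; eauto).
  assert (HGQs : Gen N Qs) by (eapply Gen_of_InQ; eauto).
  assert (HfQ : forall j, (j < N)%nat -> cont0 (fun t => f t j (Q j))) by (intros j Hj; exact (HC j (Q j) Hj (HQ j Hj))).
  assert (HfQs : forall j, (j < N)%nat -> cont0 (fun t => f t j (Qs j))) by (intros j Hj; exact (HC j (Qs j) Hj (HQs j Hj))).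
  set (c := 1 + sumN N (fun j => rnorm N (Q j) + rnorm N (Qs j))).
  assert (Hrn : forall q, 0 <= rnorm N q) by (intros; unfold rnorm; apply sqrt_pos).
  assert (Hc : 0 < c).
  { unfold c. assert (0 <= sumN N (fun j => rnorm N (Q j) + rnorm N (Qs j))); [|lra].
    apply sumN_nonneg; intros; pose proof (Hrn (Q j)); pose proof (Hrn (Qs j)); lra. }
  assert (HcQ : forall j, (j < N)%nat -> rnorm N (Q j) <= c /\ rnorm N (Qs j) <= c).
  { intros j Hj. assert (rnorm N (Q j) + rnorm N (Qs j) <= sumN N (fun j => rnorm N (Q j) + rnorm N (Qs j))).
    { apply (sumN_ge_term N (fun j => rnorm N (Q j) + rnorm N (Qs j))); auto.
      intros; pose proof (Hrn (Q b)); pose proof (Hrn (Qs b)); lra. }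
    pose proof (Hrn (Q j)); pose proof (Hrn (Qs j)). unfold c; lra. }
  set (L := map (fun j => (j, Q j)) (seq 0 N) ++ map (fun j => (j, Qs j)) (seq 0 N)).
  assert (HLin : forall p, In p L -> (fst p < N)%nat /\ D (fst p) (snd p) /\ rnorm N (snd p) <= c).
  { intros p Hp. unfold L in Hp. apply in_app_or in Hp. destruct Hp as [Hp|Hp]; apply in_map_iff in Hp;
      destruct Hp as [j [<- Hj]]; apply in_seq in Hj; simpl; repeat split; try lia;
      try apply HQ; try apply HQs; try lia; apply HcQ; lia. }
  assert (HinQ : forall j, (j < N)%nat -> In (j, Q j) L).
  { intros j Hj. unfold L. apply in_or_app; left. apply in_map_iff. exists j. split; auto. apply in_seq; lia. }
  assert (HinQs : forall j, (j < N)%nat -> In (j, Qs j) L).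
  { intros j Hj. unfold L. apply in_or_app; right. apply in_map_iff. exists j. split; auto. apply in_seq; lia. }
  set (mm := maxabs f L).
  assert (Hmm : cont0 mm).
  { apply cont0_maxabs. intros p Hp. destruct (HLin p Hp) as [H1 [H2 _]]. exact (HC _ _ H1 H2). }
  destruct (HI c Hc) as [B0 HB0].
  assert (HBm : forall T, 0 <= T -> RInt mm 0 T <= B0).
  { intros T HT. rewrite <- RInt_eqD by (apply cont0_ex_RInt; auto; lra). apply HB0; auto.
    apply Forall_forall. intros p Hp; apply HLin; auto. }
  assert (HB0pos : 0 <= B0).
  { specialize (HBm 0 (Rle_refl 0)). rewrite RInt_point in HBm. exact HBm. }
  assert (HmQ : forall j t, (j < N)%nat -> Rabs (f t j (Q j)) <= mm t).
  { intros j t Hj. apply (maxabs_ge f L t (j, Q j)); auto. }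
  assert (HmQs : forall j t, (j < N)%nat -> Rabs (f t j (Qs j)) <= mm t).
  { intros j t Hj. apply (maxabs_ge f L t (j, Qs j)); auto. }
  assert (HFe : forall e, 0 <= e -> forall k, (k < N)%nat ->
     IIP (fun s => sumN N (fun j => Ptrans N Qs s k j * f (s + e) j (Qs j))) (Feps N f e Qs k) /\
     Rabs (Feps N f e Qs k) <= B0).
  { intros e He k Hk.
    destruct (IIP_expect N Qs k (fun j s => f (s + e) j (Qs j)) (fun s => mm (s + e)) B0 HGQs Hk) as [l [Hl HlB]].
    - intros j Hj. apply (cont0_shift (fun t => f t j (Qs j))); auto.
    - apply cont0_shift; auto.
    - intros j t Hj Ht. apply HmQs; auto.
    - intros T HT. destruct (RInt_shift mm 0 T e) as [R1 _]; [apply cont0_ex_RInt; auto; lra|].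
      rewrite R1, Rplus_0_l.
      assert (RInt mm 0 e + RInt mm e (T + e) = RInt mm 0 (T + e)) by (apply RInt_ChaslesR; apply cont0_ex_RInt; auto; lra).
      assert (0 <= RInt mm 0 e) by (apply RInt_ge_0; [lra|apply cont0_ex_RInt; auto; lra|intros; apply maxabs_nonneg]).
      specialize (HBm (T + e) ltac:(lra)). lra.
    - assert (E : Feps N f e Qs k = l) by (apply IIP_IntInf; exact Hl). rewrite E. split; [exact Hl|auto]. }
  assert (HFv : forall k, (k < N)%nat -> IIP (fun s => sumN N (fun j => Ptrans N Qs s k j * f s j (Qs j))) (Fval N f Qs k)).
  { intros k Hk.
    destruct (IIP_expect N Qs k (fun j s => f s j (Qs j)) mm B0 HGQs Hk) as [l [Hl HlB]]; auto.
    assert (E : Fval N f Qs k = l) by (apply IIP_IntInf; exact Hl). rewrite E. exact Hl. }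
  set (uQ := fun t => sumN N (fun j => Ptrans N Q t i j * f t j (Q j))).
  set (uS := fun t => sumN N (fun j => Ptrans N Qs t i j * f t j (Qs j))).
  assert (HuQ : cont0 uQ).
  { apply (cont0_sumN N (fun j t => Ptrans N Q t i j * f t j (Q j))). intros j Hj.
    apply (cont0_mult (fun t => Ptrans N Q t i j)); [apply cont0_P|apply HfQ]; auto. }
  assert (HuS : cont0 uS).
  { apply (cont0_sumN N (fun j t => Ptrans N Qs t i j * f t j (Qs j))). intros j Hj.
    apply (cont0_mult (fun t => Ptrans N Qs t i j)); [apply cont0_P|apply HfQs]; auto. }
  assert (HuQ0 : uQ 0 = f 0 i (Q i)).
  { unfold uQ. rewrite (sumN_ext _ _ (fun j => (if Nat.eq_dec i j then 1 else 0) * f 0 j (Q j))).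
    - apply sumN_delta; auto.
    - intros j Hj. rewrite Ptrans_0; auto. }
  assert (HuS0 : uS 0 = f 0 i (Qs i)).
  { unfold uS. rewrite (sumN_ext _ _ (fun j => (if Nat.eq_dec i j then 1 else 0) * f 0 j (Qs j))).
    - apply sumN_delta; auto.
    - intros j Hj. rewrite Ptrans_0; auto. }
  assert (HdQ : forall e, 0 < e -> Fswitch N f e Q Qs i = RInt uQ 0 e + sumN N (fun k => Ptrans N Q e i k * Feps N f e Qs k)).
  { intros e He. unfold Fswitch. apply IIP_IntInf. apply (decomp_gen N f Q Qs i e uQ); [exact He|exact HuQ| | |].
    - intros k Hk; apply HFe; auto; lra.
    - intros t Ht. unfold Pswitch. destruct (Rle_dec t e); [|lra]. reflexivity.
    - intros t Ht. unfold Pswitch. destruct (Rle_dec t e); [lra|]. reflexivity. }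
  assert (HdS : forall e, 0 < e -> Fval N f Qs i = RInt uS 0 e + sumN N (fun k => Ptrans N Qs e i k * Feps N f e Qs k)).
  { intros e He. unfold Fval. apply IIP_IntInf. apply (decomp_gen N f Qs Qs i e uS); [exact He|exact HuS| | |].
    - intros k Hk; apply HFe; auto; lra.
    - intros t Ht. reflexivity.
    - intros t Ht. apply sumN_ext; intros j Hj. f_equal. rewrite <- Ptrans_add by auto. f_equal; ring. }
  destruct (mat_bound N Q) as [KQ [HKQ HMQ]]. destruct (mat_bound N Qs) as [KS [HKS HMS]].
  set (CQ := exp (INR N * KQ)). set (CS := exp (INR N * KS)).
  assert (HCQ : 0 <= CQ) by (apply Rlt_le, exp_pos). assert (HCS : 0 <= CS) by (apply Rlt_le, exp_pos).
  assert (HnQ : forall e, 0 <= e <= 1 -> forall k, (k < N)%nat ->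
     Rabs (Ptrans N Q e i k - (if Nat.eq_dec i k then 1 else 0) - e * Q i k) <= e ^ 2 * CQ).
  { intros; apply Ptrans_near; auto. }
  assert (HnS : forall e, 0 <= e <= 1 -> forall k, (k < N)%nat ->
     Rabs (Ptrans N Qs e i k - (if Nat.eq_dec i k then 1 else 0) - e * Qs i k) <= e ^ 2 * CS).
  { intros; apply Ptrans_near; auto. }
  assert (Hexp : forall (M : nat -> nat -> R) (F : nat -> R) e,
     sumN N (fun k => (Ptrans N M e i k - (if Nat.eq_dec i k then 1 else 0) - e * M i k) * F k) =
     sumN N (fun k => Ptrans N M e i k * F k) - F i - e * sumN N (fun j => F j * M i j)).
  { intros M F e.
    rewrite (sumN_ext _ _ (fun k => (Ptrans N M e i k * F k - (if Nat.eq_dec i k then 1 else 0) * F k) - e * (F k * M i k)))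
      by (intros; ring).
    rewrite !sumN_minus, sumN_scal, sumN_delta by auto. ring. }
  split.
  - intros eta Heta.
    destruct (A_near uQ HuQ (eta / 2)) as [d1 [Hd1 HA]]; [lra|].
    set (Cst := INR N * (CQ * B0)).
    assert (HCst : 0 <= Cst) by (unfold Cst; apply Rmult_le_pos; [apply pos_INR|apply Rmult_le_pos; auto]).
    set (d3 := eta / (2 * (Cst + 1))).
    assert (Hd3 : 0 < d3) by (unfold d3; apply Rdiv_lt_0_compat; lra).
    exists (Rmin 1 (Rmin d1 d3)). split; [apply Rmin_pos; [lra|apply Rmin_pos; auto]|].
    intros e He.
    assert (He1 : e < 1) by (pose proof (Rmin_l 1 (Rmin d1 d3)); lra).
    assert (He2 : e < d1) by (pose proof (Rmin_r 1 (Rmin d1 d3)); pose proof (Rmin_l d1 d3); lra).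
    assert (He3 : e < d3) by (pose proof (Rmin_r 1 (Rmin d1 d3)); pose proof (Rmin_r d1 d3); lra).
    rewrite HdQ by lra.
    specialize (Hexp Q (fun k => Feps N f e Qs k) e). cbv beta in Hexp.
    assert (HD1 := D_bound N (fun k => Ptrans N Q e i k) (fun k => Q i k) (fun k => Feps N f e Qs k) CQ B0 i e HCQ HB0pos
       (fun k Hk => proj2 (HFe e ltac:(lra) k Hk)) (HnQ e ltac:(lra))).
    cbv beta in HD1. fold Cst in HD1.
    specialize (HA e ltac:(lra)). rewrite HuQ0 in HA.
    replace (RInt uQ 0 e + sumN N (fun k => Ptrans N Q e i k * Feps N f e Qs k) -
       (Feps N f e Qs i + (f 0 i (Q i) + sumN N (fun j => Feps N f e Qs j * Q i j)) * e))
      with ((RInt uQ 0 e - e * f 0 i (Q i)) +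
            sumN N (fun k => (Ptrans N Q e i k - (if Nat.eq_dec i k then 1 else 0) - e * Q i k) * Feps N f e Qs k))
      by (rewrite Hexp; ring).
    eapply Rle_trans; [apply Rabs_triang|].
    assert (Cst * e <= eta / 2).
    { apply Rle_trans with (Cst * d3); [apply Rmult_le_compat_l; lra|].
      unfold d3. replace (Cst * (eta / (2 * (Cst + 1)))) with (eta / 2 * (Cst / (Cst + 1))) by (field; lra).
      assert (Cst / (Cst + 1) <= 1) by (apply Rmult_le_reg_r with (Cst + 1); [lra|]; unfold Rdiv; rewrite Rmult_assoc, Rinv_l; lra).
      nra. }
    assert (Cst * e ^ 2 <= eta / 2 * e) by (simpl; nra).
    lra.
  - intros _ eta Heta.
    set (S := sumN N (fun k => Rabs (Qs i k - Q i k))).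
    assert (HS : 0 <= S) by (apply sumN_nonneg; intros; apply Rabs_pos).
    set (eta1 := eta / (4 * (S + 1))).
    assert (Heta1 : 0 < eta1) by (unfold eta1; apply Rdiv_lt_0_compat; lra).
    assert (HNpos := pos_INR N).
    set (eta2 := eta1 / (INR N + 1)).
    assert (Heta2 : 0 < eta2) by (unfold eta2; apply Rdiv_lt_0_compat; lra).
    destruct (fin_delta N (fun j e => forall T, 0 <= T ->
        RInt (fun t => Rabs (f (t + e) j (Qs j) - f t j (Qs j))) 0 T <= eta2)) as [dT [HdT HT]].
    { intros j Hj. apply (transl_cont (fun t => f t j (Qs j)) mm B0); auto. }
    assert (Hclose : forall e, 0 < e < dT -> forall k, (k < N)%nat ->
        Rabs (Feps N f e Qs k - Fval N f Qs k) <= eta1).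
    { intros e He k Hk.
      apply Rle_trans with (INR N * eta2).
      2:{ unfold eta2. replace (INR N * (eta1 / (INR N + 1))) with (eta1 * (INR N / (INR N + 1))) by (field; lra).
          assert (INR N / (INR N + 1) <= 1) by (apply Rmult_le_reg_r with (INR N + 1); [lra|]; unfold Rdiv; rewrite Rmult_assoc, Rinv_l; lra).
          nra. }
      assert (He0 : 0 <= e) by lra.
      apply (IIP_diff_bound _ _ _ _ _ (proj1 (HFe e He0 k Hk)) (HFv k Hk)).
      intros T HT0.
      assert (Hhex : forall j, (j < N)%nat -> ex_RInt (fun t => Rabs (f (t + e) j (Qs j) - f t j (Qs j))) 0 T).
      { intros j Hj. apply cont0_ex_RInt; [|lra|lra]. apply cont0_abs, cont0_minus; [apply (cont0_shift (fun t => f t j (Qs j)))|]; auto. }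
      destruct (RInt_sumN N (fun j t => Rabs (f (t + e) j (Qs j) - f t j (Qs j))) 0 T Hhex) as [Eh Exh].
      assert (Ex1 := proj1 (proj1 (HFe e He0 k Hk)) T HT0). assert (Ex2 := proj1 (HFv k Hk) T HT0).
      rewrite <- RInt_minusR by auto.
      eapply Rle_trans; [apply (RInt_abs_le _ (fun t => sumN N (fun j => Rabs (f (t + e) j (Qs j) - f t j (Qs j))))); [lra|apply ex_RInt_minusR; auto|exact Exh|]|].
      - intros t Ht. rewrite <- sumN_minus. eapply Rle_trans; [apply sumN_abs|]. apply sumN_le; intros j Hj.
        rewrite <- Rmult_minus_distr_l, Rabs_mult. destruct (P_bounds N Qs t k j HGQs ltac:(lra) Hk Hj) as [P0 P1].
        rewrite (Rabs_right (Ptrans N Qs t k j)) by lra. pose proof (Rabs_pos (f (t + e) j (Qs j) - f t j (Qs j))). nra.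
      - rewrite Eh. eapply Rle_trans; [apply (sumN_le _ _ (fun _ => eta2))|].
        + intros j Hj. apply HT; auto.
        + rewrite sumN_const. lra. }
    destruct (A_near uQ HuQ (eta / 4)) as [d1 [Hd1 HA1]]; [lra|].
    destruct (A_near uS HuS (eta / 4)) as [d2 [Hd2 HA2]]; [lra|].
    set (CC := INR N * (CS * B0) + INR N * (CQ * B0)).
    assert (HCC : 0 <= CC) by (unfold CC; apply Rplus_le_le_0_compat; apply Rmult_le_pos; auto; apply Rmult_le_pos; auto).
    set (d3 := eta / (4 * (CC + 1))).
    assert (Hd3 : 0 < d3) by (unfold d3; apply Rdiv_lt_0_compat; lra).
    exists (Rmin (Rmin 1 d1) (Rmin (Rmin d2 dT) d3)).
    split; [repeat apply Rmin_pos; auto; lra|].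
    intros e He.
    pose proof (Rmin_l (Rmin 1 d1) (Rmin (Rmin d2 dT) d3)). pose proof (Rmin_r (Rmin 1 d1) (Rmin (Rmin d2 dT) d3)).
    pose proof (Rmin_l 1 d1). pose proof (Rmin_r 1 d1). pose proof (Rmin_l (Rmin d2 dT) d3). pose proof (Rmin_r (Rmin d2 dT) d3).
    pose proof (Rmin_l d2 dT). pose proof (Rmin_r d2 dT).
    assert (He1 : e < 1) by lra. assert (He2 : e < d1) by lra. assert (He3 : e < d2) by lra.
    assert (He4 : e < dT) by lra. assert (He5 : e < d3) by lra.
    rewrite (HdS e), (HdQ e) by lra. unfold Gamma.
    assert (HexS := Hexp Qs (fun k => Feps N f e Qs k) e). assert (HexQ := Hexp Q (fun k => Feps N f e Qs k) e).
    cbv beta in HexS, HexQ.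
    assert (Hcross : sumN N (fun k => (Qs i k - Q i k) * (Feps N f e Qs k - Fval N f Qs k)) =
       sumN N (fun k => Feps N f e Qs k * Qs i k) - sumN N (fun k => Feps N f e Qs k * Q i k)
       - sumN N (fun k => Qs i k * Fval N f Qs k) + sumN N (fun k => Q i k * Fval N f Qs k)).
    { rewrite <- !sumN_minus, <- sumN_plus. apply sumN_ext; intros; ring. }
    assert (HDS := D_bound N (fun k => Ptrans N Qs e i k) (fun k => Qs i k) (fun k => Feps N f e Qs k) CS B0 i e HCS HB0pos
       (fun k Hk => proj2 (HFe e ltac:(lra) k Hk)) (HnS e ltac:(lra))).
    assert (HDQ := D_bound N (fun k => Ptrans N Q e i k) (fun k => Q i k) (fun k => Feps N f e Qs k) CQ B0 i e HCQ HB0pos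
       (fun k Hk => proj2 (HFe e ltac:(lra) k Hk)) (HnQ e ltac:(lra))).
    cbv beta in HDS, HDQ.
    specialize (HA1 e ltac:(lra)). specialize (HA2 e ltac:(lra)). rewrite HuQ0 in HA1. rewrite HuS0 in HA2.
    set (DS := sumN N (fun k => (Ptrans N Qs e i k - (if Nat.eq_dec i k then 1 else 0) - e * Qs i k) * Feps N f e Qs k)) in *.
    set (DQ := sumN N (fun k => (Ptrans N Q e i k - (if Nat.eq_dec i k then 1 else 0) - e * Q i k) * Feps N f e Qs k)) in *.
    set (X := sumN N (fun k => (Qs i k - Q i k) * (Feps N f e Qs k - Fval N f Qs k))) in *.
    assert (HX : Rabs X <= S * eta1).
    { unfold X, S. eapply Rle_trans; [apply sumN_abs|]. rewrite <- sumN_scalr. apply sumN_le; intros k Hk.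
      rewrite Rabs_mult. apply Rmult_le_compat_l; [apply Rabs_pos|]. apply Hclose; auto; lra. }
    replace (RInt uS 0 e + sumN N (fun k => Ptrans N Qs e i k * Feps N f e Qs k) -
       (RInt uQ 0 e + sumN N (fun k => Ptrans N Q e i k * Feps N f e Qs k)) -
       (f 0 i (Qs i) + sumN N (fun j => Qs i j * Fval N f Qs j) - (f 0 i (Q i) + sumN N (fun j => Q i j * Fval N f Qs j))) * e)
      with ((RInt uS 0 e - e * f 0 i (Qs i)) - (RInt uQ 0 e - e * f 0 i (Q i)) + DS - DQ + e * X)
      by (rewrite HexS, HexQ, Hcross; ring).
    assert (Hx1 : Rabs (e * X) <= eta / 4 * e).
    { rewrite Rabs_mult, Rabs_right by lra.
      assert (S * eta1 <= eta / 4).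
      { unfold eta1. replace (S * (eta / (4 * (S + 1)))) with (eta / 4 * (S / (S + 1))) by (field; lra).
        assert (S / (S + 1) <= 1) by (apply Rmult_le_reg_r with (S + 1); [lra|]; unfold Rdiv; rewrite Rmult_assoc, Rinv_l; lra).
        nra. }
      nra. }
    assert (HCCe : CC * e <= eta / 4).
    { apply Rle_trans with (CC * d3); [apply Rmult_le_compat_l; lra|].
      unfold d3. replace (CC * (eta / (4 * (CC + 1)))) with (eta / 4 * (CC / (CC + 1))) by (field; lra).
      assert (CC / (CC + 1) <= 1) by (apply Rmult_le_reg_r with (CC + 1); [lra|]; unfold Rdiv; rewrite Rmult_assoc, Rinv_l; lra).
      nra. }
    assert (HCCe2 : CC * e ^ 2 <= eta / 4 * e) by (simpl; nra).
    assert (Rabs DS + Rabs DQ <= CC * e ^ 2) by (unfold CC; lra).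
    pose proof (Rabs_triang ((RInt uS 0 e - e * f 0 i (Qs i)) - (RInt uQ 0 e - e * f 0 i (Q i)) + DS - DQ) (e * X)).
    pose proof (Rabs_triang ((RInt uS 0 e - e * f 0 i (Qs i)) - (RInt uQ 0 e - e * f 0 i (Q i)) + DS) (- DQ)).
    pose proof (Rabs_triang ((RInt uS 0 e - e * f 0 i (Qs i)) - (RInt uQ 0 e - e * f 0 i (Q i))) DS).
    pose proof (Rabs_triang (RInt uS 0 e - e * f 0 i (Qs i)) (- (RInt uQ 0 e - e * f 0 i (Q i)))).
    rewrite Rabs_Ropp in *.
    unfold Rminus in *. lra.
Qed.
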